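(* Fix $\alpha>0$ and real constants $C_1,C_2$ with $2C_1+C_2>0$. The functions $b_-$ and $b_+$ are $C^1$ and strictly increasing on $(0,C_{3,crit})$. $b_-$ increases from $b_-(0^+)=-\frac12C_1^2-C_1C_2$ to $b_-(C_{3,crit}^-)=\frac16(C_1-C_2)^2$. $b_+$ increases from $b_+(0^+)=\frac18(C_2^2-4C_1C_2)$ to $b_+(C_{3,crit}^-)=\frac16(C_1-C_2)^2$. Denote by $C_3^-(b)$ and $C_3^+(b)$ the ($C^1$) inverses of $b_-$ and $b_+$. For every $(C_3,b)$ in the open, simply connected region $$\{(C_3,b):\ 0<C_3<C_{3,crit},\ b_-(C_3)<b<b_+(C_3)\}$$ there exists a smooth periodic solution $\phi\in H^\infty_{per}$ of (E1)–(E2). This region is the region of the $(C_3,b)$-plane enclosed by the three boundaries: (1) $C_3=0$, $b\in\big(-\frac{C_1^2}{2}-C_1C_2,\ \frac18(C_2^2-4C_1C_2)\big)$; (2) $C_3=C_3^+(b)$, $b\in\big(\frac18(C_2^2-4C_1C_2),\ \frac16(C_1-C_2)^2\big)$; (3) $C_3=C_3^-(b)$, $b\in\big(-\frac12C_1^2-C_1C_2,\ \frac16(C_1-C_2)^2\big)$.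
   Context: Let $\alpha>0$ and $\omega,\gamma,c\in\mathbb R$. Consider the Dullin–Gottwald–Holm (DGH) equation $m_t+2\omega u_x+um_x+2mu_x+\gamma u_{xxx}=0$ with $m=u-\alpha^2u_{xx}$. Travelling waves have the form $u(x,t)=\phi(\xi)$ with $\xi=x-ct$. Set $C_1=c+\gamma/\alpha^2$ and $C_2=2\omega+\gamma/\alpha^2$. Travelling wave profiles satisfy, for real constants $b$ and $C_3$, (E1) $\alpha^2(\phi-C_1)\phi''+\frac12\alpha^2(\phi')^2+(C_1-C_2-\frac32\phi)\phi=b$, together with the first integral (E2) $\alpha^2(\phi-C_1)(\phi')^2+(C_1-C_2)\phi^2-\phi^3-2b\phi+C_1(2b+C_1C_2)=C_3$. Let $C_{3,crit}=\frac1{27}(2C_1+C_2)^3$. For $C_3\in(0,C_{3,crit})$, the equation $2(\phi-C_1)^2(\phi+\frac{C_2}{2})=C_3$ has three real roots $\phi_1<\phi_2<\phi_3$, ordered as $-\frac{C_2}{2}<\phi_1<\frac{C_1-C_2}{3}<\phi_2<C_1<\phi_3$. Define $U(\phi)=-\frac12\phi^2-\frac12C_2\phi-\frac12C_1C_2-\frac{C_3}{2(\phi-C_1)}$. With $z=\xi/\alpha$, (E2) becomes $b=\frac12(d\phi/dz)^2+U(\phi)$. Set $b_-(C_3)=U(\phi_2)$ and $b_+(C_3)=U(\phi_1)$. *)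

(* Defs.v *)
From Stdlib Require Import Reals ClassicalEpsilon.
From Coquelicot Require Import Coquelicot.
Open Scope R_scope.

Definition C3crit (C1 C2 : R) : R := (2 * C1 + C2) ^ 3 / 27.

Definition cubicF (C1 C2 p : R) : R := 2 * (p - C1) ^ 2 * (p + C2 / 2).

Definition phi1 (C1 C2 C3 : R) : R :=
  epsilon (inhabits 0)
    (fun p => - C2 / 2 < p < (C1 - C2) / 3 /\ cubicF C1 C2 p = C3).

Definition phi2 (C1 C2 C3 : R) : R :=
  epsilon (inhabits 0)
    (fun p => (C1 - C2) / 3 < p < C1 /\ cubicF C1 C2 p = C3).

Definition U (C1 C2 C3 p : R) : R :=
  - / 2 * p ^ 2 - / 2 * C2 * p - / 2 * C1 * C2 - C3 / (2 * (p - C1)).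

Definition bminus (C1 C2 C3 : R) : R := U C1 C2 C3 (phi2 C1 C2 C3).
Definition bplus  (C1 C2 C3 : R) : R := U C1 C2 C3 (phi1 C1 C2 C3).

Definition C1_on (f : R -> R) (a b : R) : Prop :=
  forall x, a < x < b -> ex_derive f x /\ continuous (Derive f) x.

Definition strictly_increasing_on (f : R -> R) (a b : R) : Prop :=
  forall x y, a < x -> x < y -> y < b -> f x < f y.

Definition smooth (f : R -> R) : Prop :=
  forall n x, ex_derive_n f n x.

Definition E1 (alpha C1 C2 b : R) (phi : R -> R) : Prop :=
  forall x,
    alpha ^ 2 * (phi x - C1) * Derive_n phi 2 x
    + / 2 * alpha ^ 2 * (Derive phi x) ^ 2
    + (C1 - C2 - 3 / 2 * phi x) * phi x = b.

Definition E2 (alpha C1 C2 C3 b : R) (phi : R -> R) : Prop :=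
  forall x,
    alpha ^ 2 * (phi x - C1) * (Derive phi x) ^ 2
    + (C1 - C2) * phi x ^ 2 - phi x ^ 3 - 2 * b * phi x
    + C1 * (2 * b + C1 * C2) = C3.

Definition smooth_periodic_solution (alpha C1 C2 C3 b : R) (phi : R -> R) : Prop :=
  smooth phi /\
  (exists T, 0 < T /\ forall x, phi (x + T) = phi x) /\
  (exists x y, phi x <> phi y) /\
  E1 alpha C1 C2 b phi /\ E2 alpha C1 C2 C3 b phi.

Definition C1_inverse (f g : R -> R) (a b c d : R) : Prop :=
  (forall y, c < y < d -> a < g y < b /\ f (g y) = y) /\
  (forall x, a < x < b -> g (f x) = x) /\
  C1_on g c d.

(* Main.v *)
Require Import Defs.
From Stdlib Require Import Reals Lra Psatz ClassicalEpsilon FunctionalExtensionality.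
From Coquelicot Require Import Coquelicot.
Open Scope R_scope.

Lemma inv_derive (f g : R -> R) (y0 d eta : R) :
  0 < eta ->
  (forall y, Rabs (y - y0) < eta -> f (g y) = y) ->
  continuity_pt g y0 ->
  is_derive f (g y0) d -> d <> 0 -> is_derive g y0 (/ d).
Proof.
  intros Heta Hfg Hc Hd Hd0.
  apply is_derive_Reals in Hd. apply is_derive_Reals.
  intros eps Heps.
  assert (Hdp : 0 < Rabs d) by (apply Rabs_pos_lt; auto).
  set (e' := Rmin (Rabs d / 2) (eps * (Rabs d * Rabs d) / 2)).
  assert (He' : 0 < e').
  { unfold e'; apply Rmin_pos; [lra|]. apply Rmult_lt_0_compat; [|lra].
    apply Rmult_lt_0_compat; [lra| apply Rmult_lt_0_compat; lra]. }
  destruct (Hd e' He') as [d1 Hd1].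
  destruct (Hc d1 (cond_pos d1)) as [al [Hal Hal2]].
  assert (Hmin : 0 < Rmin al eta) by (apply Rmin_pos; lra).
  exists (mkposreal _ Hmin). intros h Hh0 Hh. simpl in Hh.
  assert (Hh1 : Rabs h < al) by (eapply Rlt_le_trans; [exact Hh| apply Rmin_l]).
  assert (Hh2 : Rabs h < eta) by (eapply Rlt_le_trans; [exact Hh| apply Rmin_r]).
  set (k := g (y0 + h) - g y0).
  assert (Hf0 : f (g y0) = y0) by (apply Hfg; rewrite Rminus_diag, Rabs_R0; lra).
  assert (Hf1 : f (g y0 + k) = y0 + h).
  { unfold k; replace (g y0 + (g (y0 + h) - g y0)) with (g (y0+h)) by ring.
    apply Hfg; replace (y0 + h - y0) with h by ring; exact Hh2. }
  assert (Hk0 : k <> 0).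
  { intro Hk. rewrite Hk, Rplus_0_r, Hf0 in Hf1. lra. }
  assert (Hk1 : Rabs k < d1).
  { unfold k. apply (Hal2 (y0 + h)). split.
    - split; [exact I| lra].
    - simpl. unfold Rdist. replace (y0 + h - y0) with h by ring. exact Hh1. }
  specialize (Hd1 k Hk0 Hk1). rewrite Hf1, Hf0 in Hd1.
  replace (y0 + h - y0) with h in Hd1 by ring.
  set (q := h / k) in *.
  assert (Hq : Rabs (q - d) < Rabs d / 2) by (eapply Rlt_le_trans; [exact Hd1| apply Rmin_l]).
  assert (Hq2 : Rabs (q - d) < eps * (Rabs d * Rabs d) / 2) by (eapply Rlt_le_trans; [exact Hd1| apply Rmin_r]).
  assert (Hqa : Rabs d / 2 < Rabs q).
  { pose proof (Rabs_triang_inv d (d - q)). replace (d - (d - q)) with q in H by ring.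
    rewrite <- Rabs_Ropp in Hq. replace (- (q - d)) with (d - q) in Hq by ring. lra. }
  assert (Hq0 : q <> 0) by (intro E; rewrite E, Rabs_R0 in Hqa; lra).
  replace (k / h - / d) with ((d - q) / (q * d)).
  2:{ unfold q. field. repeat split; auto. }
  unfold Rdiv. rewrite Rabs_mult, Rabs_inv, Rabs_mult.
  assert (P : 0 < Rabs q * Rabs d) by nra.
  assert (0 < eps * Rabs d * (Rabs q - Rabs d / 2)) by (apply Rmult_lt_0_compat; [apply Rmult_lt_0_compat|]; lra).
  assert (Rabs (d-q) < eps * (Rabs q * Rabs d)) by (rewrite Rabs_minus_sym; nra).
  apply (Rmult_lt_reg_r (Rabs q * Rabs d)); auto.
  rewrite Rmult_assoc, Rinv_l, Rmult_1_r; lra.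
Qed.

Lemma inv_cont_incr (f g : R -> R) (a b c d y0 : R) :
  (forall x y, a < x -> x < y -> y < b -> f x < f y) ->
  (forall y, c < y < d -> a < g y < b /\ f (g y) = y) ->
  c < y0 < d -> continuity_pt g y0.
Proof.
  intros Hinc Hg Hy0.
  destruct (Hg y0 Hy0) as [[Ha Hb] Hf0].
  intros eps Heps.
  set (x1 := Rmax (g y0 - eps/2) ((a + g y0)/2)).
  set (x2 := Rmin (g y0 + eps/2) ((b + g y0)/2)).
  assert (H1 : a < x1 < g y0).
  { unfold x1; split; [apply Rlt_le_trans with ((a+g y0)/2); [lra|apply Rmax_r]|].
    apply Rmax_lub_lt; lra. }
  assert (H2 : g y0 < x2 < b).
  { unfold x2; split; [apply Rmin_glb_lt; lra|].
    apply Rle_lt_trans with ((b+g y0)/2); [apply Rmin_r|lra]. }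
  assert (Hx1e : g y0 - eps/2 <= x1) by apply Rmax_l.
  assert (Hx2e : x2 <= g y0 + eps/2) by apply Rmin_l.
  assert (Hf1 : f x1 < y0) by (rewrite <- Hf0; apply Hinc; lra).
  assert (Hf2 : y0 < f x2) by (rewrite <- Hf0; apply Hinc; lra).
  set (al := Rmin (Rmin (y0 - f x1) (f x2 - y0)) (Rmin (y0 - c) (d - y0))).
  assert (Hal : 0 < al) by (unfold al; repeat apply Rmin_pos; lra).
  exists al. split; [lra|].
  intros y [_ Hy]. simpl in *. unfold Rdist in *.
  assert (Hal1 : al <= y0 - f x1) by (unfold al; eapply Rle_trans; apply Rmin_l).
  assert (Hal2 : al <= f x2 - y0) by (unfold al; eapply Rle_trans; [apply Rmin_l|apply Rmin_r]).
  assert (Hal3 : al <= y0 - c) by (unfold al; eapply Rle_trans; [apply Rmin_r|apply Rmin_l]).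
  assert (Hal4 : al <= d - y0) by (unfold al; eapply Rle_trans; [apply Rmin_r|apply Rmin_r]).
  apply Rabs_def2 in Hy. destruct Hy as [Hy1 Hy2].
  destruct (Hg y) as [[Hya Hyb] Hfy]; [lra|].
  assert (x1 < g y).
  { destruct (Rle_or_lt (g y) x1) as [E|E]; auto.
    exfalso. destruct (Rle_lt_or_eq_dec _ _ E) as [E'|E'].
    - pose proof (Hinc _ _ Hya E' (ltac:(lra) : x1 < b)). lra.
    - rewrite E' in Hfy. lra. }
  assert (g y < x2).
  { destruct (Rle_or_lt x2 (g y)) as [E|E]; auto.
    exfalso. destruct (Rle_lt_or_eq_dec _ _ E) as [E'|E'].
    - pose proof (Hinc _ _ (ltac:(lra) : a < x2) E' Hyb). lra.
    - rewrite <- E' in Hfy. lra. }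
  apply Rabs_def1; lra.
Qed.

Definition Cn (n : nat) (f : R -> R) : Prop :=
  forall k x, (k <= n)%nat -> ex_derive_n f k x.

Lemma Cn_0 f : Cn 0 f.
Proof. intros k x Hk. assert (k = 0%nat) by lia. subst. exact I. Qed.

Lemma Cn_S n f : (forall x, ex_derive f x) -> Cn n (Derive f) -> Cn (S n) f.
Proof.
  intros Hd Hn k x Hk. destruct k as [|k]; [exact I|].
  destruct k as [|k]; [exact (Hd x)|].
  specialize (Hn (S k) x ltac:(lia)). simpl in Hn |- *.
  eapply ex_derive_ext; [|exact Hn].
  intros t. pose proof (Derive_n_comp f k 1 t) as E.
  rewrite Nat.add_1_r in E. exact E.
Qed.

Lemma Cn_S_inv n f : Cn (S n) f -> (forall x, ex_derive f x) /\ Cn n (Derive f).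
Proof.
  intros H. split.
  - intros x. exact (H 1%nat x ltac:(lia)).
  - intros k x Hk. destruct k as [|k]; [exact I|].
    specialize (H (S (S k)) x ltac:(lia)). simpl in H |- *.
    eapply ex_derive_ext; [|exact H].
    intros t. pose proof (Derive_n_comp f k 1 t) as E.
    rewrite Nat.add_1_r in E. symmetry. exact E.
Qed.

Lemma Cn_weaken n f : Cn (S n) f -> Cn n f.
Proof. intros H k x Hk. apply H. lia. Qed.

Definition smooth' (f : R -> R) := forall n, Cn n f.

Lemma Cn_ext n f g : (forall x, f x = g x) -> Cn n f -> Cn n g.
Proof.
  intros E H. replace g with f; auto. apply functional_extensionality; auto.
Qed.

Lemma Cn_const n c : Cn n (fun _ => c).
Proof.
  revert c; induction n; intros c. apply Cn_0.
  apply Cn_S. intros; apply ex_derive_const.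
  eapply Cn_ext; [|exact (IHn 0)]. intros x. simpl. rewrite Derive_const. reflexivity.
Qed.

Lemma Cn_plus n f g : Cn n f -> Cn n g -> Cn n (fun x => f x + g x).
Proof.
  revert f g; induction n; intros f g Hf Hg. apply Cn_0.
  apply Cn_S_inv in Hf as [Hf1 Hf2]. apply Cn_S_inv in Hg as [Hg1 Hg2].
  apply Cn_S. intros x; apply (ex_derive_plus f g x); auto.
  eapply Cn_ext; [|exact (IHn _ _ Hf2 Hg2)].
  intros x. simpl. rewrite Derive_plus; auto.
Qed.

Lemma Cn_mult n f g : Cn n f -> Cn n g -> Cn n (fun x => f x * g x).
Proof.
  revert f g; induction n; intros f g Hf Hg. apply Cn_0.
  pose proof (Cn_weaken _ _ Hf) as Hf'. pose proof (Cn_weaken _ _ Hg) as Hg'.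
  apply Cn_S_inv in Hf as [Hf1 Hf2]. apply Cn_S_inv in Hg as [Hg1 Hg2].
  apply Cn_S. intros x; apply (ex_derive_mult f g x); auto.
  eapply Cn_ext; [|exact (Cn_plus _ _ _ (IHn _ _ Hf2 Hg') (IHn _ _ Hf' Hg2))].
  intros x. simpl. rewrite Derive_mult; auto.
Qed.

Lemma Cn_scal n c f : Cn n f -> Cn n (fun x => c * f x).
Proof. intros; apply Cn_mult; auto using Cn_const. Qed.

Lemma Cn_opp n f : Cn n f -> Cn n (fun x => - f x).
Proof. intros H; eapply Cn_ext; [|apply (Cn_scal n (-1) f H)]. intros; simpl; ring. Qed.

Lemma Cn_inv n u : Cn n u -> (forall x, u x <> 0) -> Cn n (fun x => / u x).
Proof.
  revert u; induction n; intros u Hu Hne. apply Cn_0.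
  pose proof (Cn_weaken _ _ Hu) as Hu'.
  apply Cn_S_inv in Hu as [Hu1 Hu2].
  apply Cn_S. intros x; apply ex_derive_inv; auto.
  pose proof (IHn _ Hu' Hne) as Hi.
  eapply Cn_ext; [|exact (Cn_opp _ _ (Cn_mult _ _ _ Hu2 (Cn_mult _ _ _ Hi Hi)))].
  intros x. simpl. rewrite Derive_inv; auto. field. auto.
Qed.

Lemma Cn_sqrt n h : Cn n h -> (forall x, 0 < h x) -> Cn n (fun x => sqrt (h x)).
Proof.
  revert h; induction n; intros h Hh Hpos. apply Cn_0.
  pose proof (Cn_weaken _ _ Hh) as Hh'.
  apply Cn_S_inv in Hh as [Hh1 Hh2].
  assert (Hd : forall x, is_derive (fun y => sqrt (h y)) x (Derive h x / (2 * sqrt (h x)))).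
  { intros x. pose proof (Hpos x). auto_derive; [split; auto|].
    rewrite Rmult_1_l. reflexivity. }
  apply Cn_S. intros x; eexists; apply Hd.
  pose proof (Cn_inv _ _ (IHn _ Hh' Hpos) (fun x => Rgt_not_eq _ _ (sqrt_lt_R0 _ (Hpos x)))) as Hi.
  eapply Cn_ext; [|exact (Cn_scal _ (/2) _ (Cn_mult _ _ _ Hh2 Hi))].
  intros x. simpl. transitivity (Derive h x / (2 * sqrt (h x))).
  field. apply Rgt_not_eq, sqrt_lt_R0; auto.
  symmetry; apply is_derive_unique, Hd.
Qed.

Lemma Cn_cos_sin n : Cn n cos /\ Cn n sin.
Proof.
  induction n. split; apply Cn_0.
  destruct IHn as [Hc Hs]. split; apply Cn_S.
  - intros x; eexists; apply is_derive_cos.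
  - eapply Cn_ext; [|exact (Cn_opp _ _ Hs)]. intros x; simpl.
    rewrite (is_derive_unique _ _ _ (is_derive_cos x)). reflexivity.
  - intros x; eexists; apply is_derive_sin.
  - eapply Cn_ext; [|exact Hc]. intros x; simpl.
    rewrite (is_derive_unique _ _ _ (is_derive_sin x)). reflexivity.
Qed.

Lemma Cn_flow (th w : R -> R) :
  (forall x, is_derive th x (w (th x))) -> smooth' w ->
  forall n F, smooth' F -> Cn n (fun x => F (th x)).
Proof.
  intros Hth Hw n. induction n; intros F HF. apply Cn_0.
  assert (HF1 : forall x, ex_derive F x) by (intros; exact (proj1 (Cn_S_inv _ _ (HF 1%nat)) x)).
  assert (HF2 : smooth' (Derive F)) by (intros k; exact (proj2 (Cn_S_inv _ _ (HF (S k))))).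
  assert (Hd : forall x, is_derive (fun y => F (th y)) x (Derive F (th x) * w (th x))).
  { intros x. eapply is_derive_ext; [intros; reflexivity|].
    pose proof (is_derive_comp F th x _ _ (Derive_correct _ _ (HF1 (th x))) (Hth x)) as H.
    simpl in H. unfold scal in H; simpl in H; unfold mult in H; simpl in H.
    rewrite Rmult_comm. exact H. }
  apply Cn_S. intros x; eexists; apply Hd.
  eapply Cn_ext; [|exact (IHn (fun t => Derive F t * w t) (fun k => Cn_mult _ _ _ (HF2 k) (Hw k)))].
  intros x; simpl. symmetry; apply is_derive_unique, Hd.
Qed.

Lemma h_incr u v K : 0 < K -> -K/2 <= u -> u < v -> v <= -K/3 ->
  2 * u ^ 2 * (u + K/2) < 2 * v ^ 2 * (v + K/2).
Proof.
  intros HK Hu Huv Hv.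
  assert (E: 2 * v ^ 2 * (v + K/2) - 2 * u ^ 2 * (u + K/2) = (v-u)*(2*(u*u+u*v+v*v) + K*(u+v))) by field.
  assert (0 < 2*(u*u+u*v+v*v) + K*(u+v)).
  { assert (0 <= (-(u+v)/2) * (-(3*(u+v)/2 + K))) by (apply Rmult_le_pos; lra).
    assert (0 < (u-v)*(u-v)) by nra. nra. }
  nra.
Qed.
Lemma h_decr u v K : 0 < K -> -K/3 <= u -> u < v -> v <= 0 ->
  2 * v ^ 2 * (v + K/2) < 2 * u ^ 2 * (u + K/2).
Proof.
  intros HK Hu Huv Hv.
  assert (E: 2 * v ^ 2 * (v + K/2) - 2 * u ^ 2 * (u + K/2) = (v-u)*(2*(u*u+u*v+v*v) + K*(u+v))) by field.
  assert (2*(u*u+u*v+v*v) + K*(u+v) < 0).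
  { assert (u*(u+K/3) <= 0) by nra. assert (v*(v+K/3) <= 0) by nra.
    assert (v*(u+K/3) <= 0) by nra. nra. }
  nra.
Qed.

Lemma cubicF_alt C1 C2 x : cubicF C1 C2 x = 2 * (x-C1)^2 * ((x - C1) + (2*C1+C2)/2).
Proof. unfold cubicF. field. Qed.

Lemma cubic_incr C1 C2 x y : 0 < 2*C1+C2 -> -C2/2 <= x -> x < y -> y <= (C1-C2)/3 ->
  cubicF C1 C2 x < cubicF C1 C2 y.
Proof. intros. rewrite !cubicF_alt. apply h_incr; lra. Qed.

Lemma cubic_decr C1 C2 x y : 0 < 2*C1+C2 -> (C1-C2)/3 <= x -> x < y -> y <= C1 ->
  cubicF C1 C2 y < cubicF C1 C2 x.
Proof. intros. rewrite !cubicF_alt. apply h_decr; lra. Qed.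

Lemma cubic_cont C1 C2 : continuity (cubicF C1 C2).
Proof. unfold cubicF. reg. Qed.

Lemma cubic_pm C1 C2 : cubicF C1 C2 (-C2/2) = 0.
Proof. unfold cubicF. field. Qed.
Lemma cubic_C1 C1 C2 : cubicF C1 C2 C1 = 0.
Proof. unfold cubicF. field. Qed.
Lemma cubic_p0 C1 C2 : cubicF C1 C2 ((C1-C2)/3) = C3crit C1 C2.
Proof. unfold cubicF, C3crit. field. Qed.

Lemma C3crit_pos C1 C2 : 0 < 2*C1+C2 -> 0 < C3crit C1 C2.
Proof. intros. unfold C3crit. apply Rmult_lt_0_compat; [|lra]. apply pow_lt; lra. Qed.

Lemma phi1_spec C1 C2 C3 : 0 < 2*C1+C2 -> 0 < C3 < C3crit C1 C2 ->
  -C2/2 < phi1 C1 C2 C3 < (C1-C2)/3 /\ cubicF C1 C2 (phi1 C1 C2 C3) = C3.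
Proof.
  intros HK HC. unfold phi1. apply epsilon_spec.
  destruct (IVT_gen (cubicF C1 C2) (-C2/2) ((C1-C2)/3) C3 (cubic_cont C1 C2)) as [x [Hx Hfx]].
  - rewrite cubic_pm, cubic_p0, Rmin_left, Rmax_right; lra.
  - rewrite Rmin_left, Rmax_right in Hx by lra. exists x.
    split; [|exact Hfx]. split.
    + destruct (Rle_lt_or_eq_dec _ _ (proj1 Hx)); auto. subst x. rewrite cubic_pm in Hfx. lra.
    + destruct (Rle_lt_or_eq_dec _ _ (proj2 Hx)); auto. subst x. rewrite cubic_p0 in Hfx. lra.
Qed.

Lemma phi2_spec C1 C2 C3 : 0 < 2*C1+C2 -> 0 < C3 < C3crit C1 C2 ->
  (C1-C2)/3 < phi2 C1 C2 C3 < C1 /\ cubicF C1 C2 (phi2 C1 C2 C3) = C3.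
Proof.
  intros HK HC. unfold phi2. apply epsilon_spec.
  destruct (IVT_gen (cubicF C1 C2) ((C1-C2)/3) C1 C3 (cubic_cont C1 C2)) as [x [Hx Hfx]].
  - rewrite cubic_C1, cubic_p0, Rmin_right, Rmax_left; lra.
  - rewrite Rmin_left, Rmax_right in Hx by lra. exists x.
    split; [|exact Hfx]. split.
    + destruct (Rle_lt_or_eq_dec _ _ (proj1 Hx)); auto. subst x. rewrite cubic_p0 in Hfx. lra.
    + destruct (Rle_lt_or_eq_dec _ _ (proj2 Hx)); auto. subst x. rewrite cubic_C1 in Hfx. lra.
Qed.

Lemma phi1_unique C1 C2 x : 0 < 2*C1+C2 -> -C2/2 < x < (C1-C2)/3 ->
  phi1 C1 C2 (cubicF C1 C2 x) = x.
Proof.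
  intros HK Hx.
  assert (HC : 0 < cubicF C1 C2 x < C3crit C1 C2).
  { rewrite <- (cubic_pm C1 C2), <- (cubic_p0 C1 C2). split; apply cubic_incr; lra. }
  destruct (phi1_spec C1 C2 _ HK HC) as [Hp Hf].
  destruct (Rtotal_order (phi1 C1 C2 (cubicF C1 C2 x)) x) as [E|[E|E]]; auto.
  - assert (Hc : cubicF C1 C2 (phi1 C1 C2 (cubicF C1 C2 x)) < cubicF C1 C2 x) by (apply cubic_incr; lra). lra.
  - assert (Hc : cubicF C1 C2 x < cubicF C1 C2 (phi1 C1 C2 (cubicF C1 C2 x))) by (apply cubic_incr; lra). lra.
Qed.

Lemma phi2_unique C1 C2 x : 0 < 2*C1+C2 -> (C1-C2)/3 < x < C1 ->
  phi2 C1 C2 (cubicF C1 C2 x) = x.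
Proof.
  intros HK Hx.
  assert (HC : 0 < cubicF C1 C2 x < C3crit C1 C2).
  { rewrite <- (cubic_C1 C1 C2), <- (cubic_p0 C1 C2). split; apply cubic_decr; lra. }
  destruct (phi2_spec C1 C2 _ HK HC) as [Hp Hf].
  destruct (Rtotal_order (phi2 C1 C2 (cubicF C1 C2 x)) x) as [E|[E|E]]; auto.
  - assert (Hc : cubicF C1 C2 x < cubicF C1 C2 (phi2 C1 C2 (cubicF C1 C2 x))) by (apply cubic_decr; lra). lra.
  - assert (Hc : cubicF C1 C2 (phi2 C1 C2 (cubicF C1 C2 x)) < cubicF C1 C2 x) by (apply cubic_decr; lra). lra.
Qed.

Definition Vf C1 C2 p := p * (C1 - C2 - 3/2 * p).

Lemma U_crit C1 C2 p : p <> C1 -> U C1 C2 (cubicF C1 C2 p) p = Vf C1 C2 p.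
Proof. intros. unfold U, cubicF, Vf. field. lra. Qed.

Lemma bminus_eq C1 C2 C3 : 0 < 2*C1+C2 -> 0 < C3 < C3crit C1 C2 ->
  bminus C1 C2 C3 = Vf C1 C2 (phi2 C1 C2 C3).
Proof.
  intros HK HC. destruct (phi2_spec C1 C2 C3 HK HC) as [Hp Hf].
  unfold bminus. rewrite <- Hf at 1. apply U_crit. lra.
Qed.

Lemma bplus_eq C1 C2 C3 : 0 < 2*C1+C2 -> 0 < C3 < C3crit C1 C2 ->
  bplus C1 C2 C3 = Vf C1 C2 (phi1 C1 C2 C3).
Proof.
  intros HK HC. destruct (phi1_spec C1 C2 C3 HK HC) as [Hp Hf].
  unfold bplus. rewrite <- Hf at 1. apply U_crit. lra.
Qed.

Lemma Vf_incr C1 C2 x y : x < y -> y <= (C1-C2)/3 -> Vf C1 C2 x < Vf C1 C2 y.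
Proof.
  intros. unfold Vf.
  assert (E : y * (C1 - C2 - 3/2*y) - x * (C1 - C2 - 3/2*x) = (y-x)*(C1-C2 - 3/2*(x+y))) by field.
  assert (0 < (y-x)*(C1-C2 - 3/2*(x+y))) by (apply Rmult_lt_0_compat; lra). lra.
Qed.

Lemma Vf_decr C1 C2 x y : (C1-C2)/3 <= x -> x < y -> Vf C1 C2 y < Vf C1 C2 x.
Proof.
  intros. unfold Vf.
  assert (E : y * (C1 - C2 - 3/2*y) - x * (C1 - C2 - 3/2*x) = (y-x)*(C1-C2 - 3/2*(x+y))) by field.
  assert (0 < (y-x)*(-(C1-C2 - 3/2*(x+y)))) by (apply Rmult_lt_0_compat; lra). lra.
Qed.

Lemma phi1_mono C1 C2 x y : 0 < 2*C1+C2 -> 0 < x -> x < y -> y < C3crit C1 C2 ->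
  phi1 C1 C2 x < phi1 C1 C2 y.
Proof.
  intros HK H1 H2 H3.
  destruct (phi1_spec C1 C2 x HK ltac:(lra)) as [Hx Hfx].
  destruct (phi1_spec C1 C2 y HK ltac:(lra)) as [Hy Hfy].
  destruct (Rlt_or_le (phi1 C1 C2 x) (phi1 C1 C2 y)) as [E|E]; auto.
  destruct (Rle_lt_or_eq_dec _ _ E) as [E'|E'].
  - assert (Hc : cubicF C1 C2 (phi1 C1 C2 y) < cubicF C1 C2 (phi1 C1 C2 x)) by (apply cubic_incr; lra). lra.
  - rewrite E' in Hfy. lra.
Qed.

Lemma phi2_mono C1 C2 x y : 0 < 2*C1+C2 -> 0 < x -> x < y -> y < C3crit C1 C2 ->
  phi2 C1 C2 y < phi2 C1 C2 x.
Proof.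
  intros HK H1 H2 H3.
  destruct (phi2_spec C1 C2 x HK ltac:(lra)) as [Hx Hfx].
  destruct (phi2_spec C1 C2 y HK ltac:(lra)) as [Hy Hfy].
  destruct (Rlt_or_le (phi2 C1 C2 y) (phi2 C1 C2 x)) as [E|E]; auto.
  destruct (Rle_lt_or_eq_dec _ _ E) as [E'|E'].
  - assert (Hc : cubicF C1 C2 (phi2 C1 C2 y) < cubicF C1 C2 (phi2 C1 C2 x)) by (apply cubic_decr; lra). lra.
  - rewrite <- E' in Hfy. lra.
Qed.

Lemma bminus_incr C1 C2 : 0 < 2*C1+C2 -> strictly_increasing_on (bminus C1 C2) 0 (C3crit C1 C2).
Proof.
  intros HK x y H1 H2 H3. rewrite !bminus_eq by (auto; lra).
  destruct (phi2_spec C1 C2 y HK ltac:(lra)) as [Hy _].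
  apply Vf_decr; [lra|]. apply phi2_mono; auto.
Qed.

Lemma bplus_incr C1 C2 : 0 < 2*C1+C2 -> strictly_increasing_on (bplus C1 C2) 0 (C3crit C1 C2).
Proof.
  intros HK x y H1 H2 H3. rewrite !bplus_eq by (auto; lra).
  destruct (phi1_spec C1 C2 y HK ltac:(lra)) as [Hy _].
  apply Vf_incr; [|lra]. apply phi1_mono; auto.
Qed.


Definition dg C1 C2 p := 2 * (p - C1) * (3 * p + C2 - C1).

Lemma cubic_derive C1 C2 p : is_derive (cubicF C1 C2) p (dg C1 C2 p).
Proof. unfold cubicF, dg. auto_derive; auto. field. Qed.

Lemma Vf_derive C1 C2 p : is_derive (Vf C1 C2) p (C1 - C2 - 3 * p).
Proof. unfold Vf. auto_derive; auto. field. Qed.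

Lemma cont_to_continuous f x : continuity_pt f x -> continuous f x.
Proof. intros H. apply continuity_pt_filterlim in H. exact H. Qed.

Lemma C1_on_gen C1 C2 (h b : R -> R) lo hi :
  0 < 2*C1+C2 ->
  (forall y, 0 < y < C3crit C1 C2 -> lo < h y < hi /\ cubicF C1 C2 (h y) = y) ->
  (forall y, 0 < y < C3crit C1 C2 -> continuity_pt h y) ->
  (forall p, lo < p < hi -> dg C1 C2 p <> 0) ->
  (forall y, 0 < y < C3crit C1 C2 -> b y = Vf C1 C2 (h y)) ->
  C1_on b 0 (C3crit C1 C2) /\
  (forall y, 0 < y < C3crit C1 C2 -> is_derive b y ((C1 - C2 - 3 * h y) / dg C1 C2 (h y))).
Proof.
  intros HK Hh Hc Hdg Hb.
  assert (Hdh : forall y, 0 < y < C3crit C1 C2 -> is_derive h y (/ dg C1 C2 (h y))).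
  { intros y Hy. apply inv_derive with (f := cubicF C1 C2) (eta := Rmin y (C3crit C1 C2 - y)).
    - apply Rmin_pos; lra.
    - intros z Hz. apply Hh. apply Rabs_def2 in Hz.
      pose proof (Rmin_l y (C3crit C1 C2 - y)). pose proof (Rmin_r y (C3crit C1 C2 - y)). lra.
    - auto.
    - apply cubic_derive.
    - apply Hdg, Hh, Hy. }
  assert (Hdb : forall y, 0 < y < C3crit C1 C2 -> is_derive b y ((C1 - C2 - 3 * h y) / dg C1 C2 (h y))).
  { intros y Hy. apply is_derive_ext_loc with (f := fun z => Vf C1 C2 (h z)).
    - assert (Hp : 0 < Rmin y (C3crit C1 C2 - y)) by (apply Rmin_pos; lra).
      exists (mkposreal _ Hp). intros z Hz. simpl in Hz. unfold ball in Hz; simpl in Hz.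
      unfold AbsRing_ball, abs, minus, plus, opp in Hz; simpl in Hz.
      apply Rabs_def2 in Hz.
      pose proof (Rmin_l y (C3crit C1 C2 - y)). pose proof (Rmin_r y (C3crit C1 C2 - y)).
      symmetry; apply Hb; lra.
    - pose proof (is_derive_comp (Vf C1 C2) h y _ _ (Vf_derive C1 C2 (h y)) (Hdh y Hy)) as H.
      simpl in H. unfold scal in H; simpl in H; unfold mult in H; simpl in H.
      replace ((C1 - C2 - 3 * h y) / dg C1 C2 (h y)) with (/ dg C1 C2 (h y) * (C1 - C2 - 3 * h y)) by (unfold Rdiv; ring).
      exact H. }
  split; [|exact Hdb].
  intros x Hx. split. eexists; apply Hdb; auto.
  apply continuous_ext_loc with (g := fun y => (C1 - C2 - 3 * h y) / dg C1 C2 (h y)).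
  - assert (Hp : 0 < Rmin x (C3crit C1 C2 - x)) by (apply Rmin_pos; lra).
    exists (mkposreal _ Hp). intros z Hz. simpl in Hz. unfold ball in Hz; simpl in Hz.
    unfold AbsRing_ball, abs, minus, plus, opp in Hz; simpl in Hz.
    apply Rabs_def2 in Hz.
    pose proof (Rmin_l x (C3crit C1 C2 - x)). pose proof (Rmin_r x (C3crit C1 C2 - x)).
    symmetry; apply is_derive_unique, Hdb; lra.
  - apply cont_to_continuous.
    apply (continuity_pt_comp h (fun p => (C1 - C2 - 3 * p) / dg C1 C2 p)); auto.
    unfold dg. apply continuity_pt_div; [reg|reg|].
    apply Hdg, Hh, Hx.
Qed.


Lemma ball_R (x : R) (e : R) (y : R) : ball x e y <-> Rabs (y - x) < e.
Proof. reflexivity. Qed.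

Lemma lim_right (h : R -> R) a l :
  (forall eps, 0 < eps -> exists del, 0 < del /\ forall y, a < y < a + del -> Rabs (h y - l) < eps) ->
  filterlim h (at_right a) (locally l).
Proof.
  intros H. apply filterlim_locally. intros eps.
  destruct (H eps (cond_pos eps)) as [del [Hd Hy]].
  exists (mkposreal _ Hd). intros y Hb Hay. apply ball_R. apply ball_R in Hb. simpl in Hb.
  apply Hy. apply Rabs_def2 in Hb. cbv beta in Hay. unfold minus, plus, opp in Hb; simpl in Hb. lra.
Qed.

Lemma lim_left (h : R -> R) a l :
  (forall eps, 0 < eps -> exists del, 0 < del /\ forall y, a - del < y < a -> Rabs (h y - l) < eps) ->
  filterlim h (at_left a) (locally l).
Proof.
  intros H. apply filterlim_locally. intros eps.
  destruct (H eps (cond_pos eps)) as [del [Hd Hy]].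
  exists (mkposreal _ Hd). intros y Hb Hay. apply ball_R. apply ball_R in Hb. simpl in Hb.
  apply Hy. apply Rabs_def2 in Hb. cbv beta in Hay. unfold minus, plus, opp in Hb; simpl in Hb. lra.
Qed.

Lemma lim_Vf_right C1 C2 (h b : R -> R) a d l L :
  0 < d ->
  (forall y, a < y < a + d -> b y = Vf C1 C2 (h y)) ->
  filterlim h (at_right a) (locally l) -> Vf C1 C2 l = L ->
  filterlim b (at_right a) (locally L).
Proof.
  intros Hd Hb Hh HL. subst L.
  apply filterlim_ext_loc with (f := fun y => Vf C1 C2 (h y)).
  - exists (mkposreal _ Hd). intros y Hy Hay. apply ball_R in Hy. simpl in Hy.
    apply Rabs_def2 in Hy. cbv beta in Hay. unfold minus, plus, opp in Hy; simpl in Hy. symmetry; apply Hb; lra.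
  - eapply filterlim_comp; [exact Hh|].
    apply cont_to_continuous. unfold Vf. reg.
Qed.

Lemma lim_Vf_left C1 C2 (h b : R -> R) a d l L :
  0 < d ->
  (forall y, a - d < y < a -> b y = Vf C1 C2 (h y)) ->
  filterlim h (at_left a) (locally l) -> Vf C1 C2 l = L ->
  filterlim b (at_left a) (locally L).
Proof.
  intros Hd Hb Hh HL. subst L.
  apply filterlim_ext_loc with (f := fun y => Vf C1 C2 (h y)).
  - exists (mkposreal _ Hd). intros y Hy Hay. apply ball_R in Hy. simpl in Hy.
    apply Rabs_def2 in Hy. cbv beta in Hay. unfold minus, plus, opp in Hy; simpl in Hy. symmetry; apply Hb; lra.
  - eapply filterlim_comp; [exact Hh|].
    apply cont_to_continuous. unfold Vf. reg.
Qed.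

Lemma phi2_lim0 C1 C2 : 0 < 2*C1+C2 -> filterlim (phi2 C1 C2) (at_right 0) (locally C1).
Proof.
  intros HK. apply lim_right. intros eps He.
  set (q := Rmax (C1 - eps/2) ((C1 - C2)/3 + (C1 - (C1-C2)/3)/2)).
  assert (Hq : (C1-C2)/3 < q < C1).
  { unfold q; split. eapply Rlt_le_trans; [|apply Rmax_r]; lra. apply Rmax_lub_lt; lra. }
  assert (Hq2 : C1 - eps/2 <= q) by apply Rmax_l.
  assert (Hc : 0 < cubicF C1 C2 q < C3crit C1 C2).
  { rewrite <- (cubic_C1 C1 C2), <- (cubic_p0 C1 C2). split; apply cubic_decr; lra. }
  exists (cubicF C1 C2 q). split; [lra|]. intros y Hy.
  destruct (phi2_spec C1 C2 y HK ltac:(lra)) as [Hp Hf].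
  assert (q < phi2 C1 C2 y).
  { destruct (Rlt_or_le q (phi2 C1 C2 y)) as [E|E]; auto.
    destruct (Rle_lt_or_eq_dec _ _ E) as [E'|E'].
    - assert (cubicF C1 C2 q < cubicF C1 C2 (phi2 C1 C2 y)) by (apply cubic_decr; lra). lra.
    - rewrite E' in Hf. lra. }
  apply Rabs_def1; lra.
Qed.

Lemma phi2_limc C1 C2 : 0 < 2*C1+C2 ->
  filterlim (phi2 C1 C2) (at_left (C3crit C1 C2)) (locally ((C1-C2)/3)).
Proof.
  intros HK. apply lim_left. intros eps He.
  set (q := Rmin ((C1 - C2)/3 + eps/2) ((C1 - C2)/3 + (C1 - (C1-C2)/3)/2)).
  assert (Hq : (C1-C2)/3 < q < C1).
  { unfold q; split. apply Rmin_glb_lt; lra. eapply Rle_lt_trans; [apply Rmin_r|]; lra. }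
  assert (Hq2 : q <= (C1 - C2)/3 + eps/2) by apply Rmin_l.
  assert (Hc : 0 < cubicF C1 C2 q < C3crit C1 C2).
  { rewrite <- (cubic_C1 C1 C2), <- (cubic_p0 C1 C2). split; apply cubic_decr; lra. }
  exists (C3crit C1 C2 - cubicF C1 C2 q). split; [lra|]. intros y Hy.
  destruct (phi2_spec C1 C2 y HK ltac:(lra)) as [Hp Hf].
  assert (phi2 C1 C2 y < q).
  { destruct (Rlt_or_le (phi2 C1 C2 y) q) as [E|E]; auto.
    destruct (Rle_lt_or_eq_dec _ _ E) as [E'|E'].
    - assert (cubicF C1 C2 (phi2 C1 C2 y) < cubicF C1 C2 q) by (apply cubic_decr; lra). lra.
    - rewrite <- E' in Hf. lra. }
  apply Rabs_def1; lra.
Qed.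

Lemma phi1_lim0 C1 C2 : 0 < 2*C1+C2 -> filterlim (phi1 C1 C2) (at_right 0) (locally (-C2/2)).
Proof.
  intros HK. apply lim_right. intros eps He.
  set (q := Rmin (-C2/2 + eps/2) (-C2/2 + ((C1 - C2)/3 + C2/2)/2)).
  assert (Hq : -C2/2 < q < (C1-C2)/3).
  { unfold q; split. apply Rmin_glb_lt; lra. eapply Rle_lt_trans; [apply Rmin_r|]; lra. }
  assert (Hq2 : q <= -C2/2 + eps/2) by apply Rmin_l.
  assert (Hc : 0 < cubicF C1 C2 q < C3crit C1 C2).
  { rewrite <- (cubic_pm C1 C2), <- (cubic_p0 C1 C2). split; apply cubic_incr; lra. }
  exists (cubicF C1 C2 q). split; [lra|]. intros y Hy.
  destruct (phi1_spec C1 C2 y HK ltac:(lra)) as [Hp Hf].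
  assert (phi1 C1 C2 y < q).
  { destruct (Rlt_or_le (phi1 C1 C2 y) q) as [E|E]; auto.
    destruct (Rle_lt_or_eq_dec _ _ E) as [E'|E'].
    - assert (cubicF C1 C2 q < cubicF C1 C2 (phi1 C1 C2 y)) by (apply cubic_incr; lra). lra.
    - rewrite <- E' in Hf. lra. }
  apply Rabs_def1; lra.
Qed.

Lemma phi1_limc C1 C2 : 0 < 2*C1+C2 ->
  filterlim (phi1 C1 C2) (at_left (C3crit C1 C2)) (locally ((C1-C2)/3)).
Proof.
  intros HK. apply lim_left. intros eps He.
  set (q := Rmax ((C1 - C2)/3 - eps/2) (-C2/2 + ((C1 - C2)/3 + C2/2)/2)).
  assert (Hq : -C2/2 < q < (C1-C2)/3).
  { unfold q; split. eapply Rlt_le_trans; [|apply Rmax_r]; lra. apply Rmax_lub_lt; lra. }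
  assert (Hq2 : (C1 - C2)/3 - eps/2 <= q) by apply Rmax_l.
  assert (Hc : 0 < cubicF C1 C2 q < C3crit C1 C2).
  { rewrite <- (cubic_pm C1 C2), <- (cubic_p0 C1 C2). split; apply cubic_incr; lra. }
  exists (C3crit C1 C2 - cubicF C1 C2 q). split; [lra|]. intros y Hy.
  destruct (phi1_spec C1 C2 y HK ltac:(lra)) as [Hp Hf].
  assert (q < phi1 C1 C2 y).
  { destruct (Rlt_or_le q (phi1 C1 C2 y)) as [E|E]; auto.
    destruct (Rle_lt_or_eq_dec _ _ E) as [E'|E'].
    - assert (cubicF C1 C2 (phi1 C1 C2 y) < cubicF C1 C2 q) by (apply cubic_incr; lra). lra.
    - rewrite E' in Hf. lra. }
  apply Rabs_def1; lra.
Qed.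

Lemma phi1_cont C1 C2 y : 0 < 2*C1+C2 -> 0 < y < C3crit C1 C2 -> continuity_pt (phi1 C1 C2) y.
Proof.
  intros HK Hy. apply (inv_cont_incr (cubicF C1 C2) (phi1 C1 C2) (-C2/2) ((C1-C2)/3) 0 (C3crit C1 C2)); auto.
  - intros; apply cubic_incr; lra.
  - intros; apply phi1_spec; auto.
Qed.

Lemma phi2_cont C1 C2 y : 0 < 2*C1+C2 -> 0 < y < C3crit C1 C2 -> continuity_pt (phi2 C1 C2) y.
Proof.
  intros HK Hy.
  assert (H : continuity_pt (fun z => phi2 C1 C2 (- z)) (- y)).
  { apply (inv_cont_incr (fun p => - cubicF C1 C2 p) (fun z => phi2 C1 C2 (- z)) ((C1-C2)/3) C1 (- C3crit C1 C2) 0).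
    - intros a b Ha Hab Hb. pose proof (cubic_decr C1 C2 a b HK ltac:(lra) Hab ltac:(lra)). lra.
    - intros z Hz. destruct (phi2_spec C1 C2 (-z) HK ltac:(lra)) as [H1 H2]. split; auto. rewrite H2; ring.
    - lra. }
  assert (E : phi2 C1 C2 = comp (fun z => phi2 C1 C2 (- z)) (fun z => - z)).
  { apply functional_extensionality; intros z; unfold comp; rewrite Ropp_involutive; reflexivity. }
  rewrite E. apply continuity_pt_comp; [reg|]. exact H.
Qed.


Definition pX C1 C2 (sg b : R) := (C1 - C2)/3 + sg * sqrt ((C1 - C2)^2 - 6 * b) / 3.
Definition C3X C1 C2 sg b := cubicF C1 C2 (pX C1 C2 sg b).

Lemma Vf_pX C1 C2 sg b : sg * sg = 1 -> b < / 6 * (C1 - C2) ^ 2 -> Vf C1 C2 (pX C1 C2 sg b) = b.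
Proof.
  intros Hs Hb. unfold Vf, pX.
  assert (Hq : sqrt ((C1 - C2)^2 - 6 * b) * sqrt ((C1 - C2)^2 - 6 * b) = (C1 - C2)^2 - 6 * b)
    by (apply sqrt_sqrt; lra).
  set (s := sqrt ((C1 - C2)^2 - 6 * b)) in *.
  transitivity ((C1 - C2) ^ 2 / 6 - (sg * sg) * (s * s) / 6). field.
  rewrite Hs, Hq. field.
Qed.

Lemma sqrt_lt_sq x y : 0 <= x -> 0 < y -> x < y * y -> sqrt x < y.
Proof.
  intros Hx Hy Hxy. rewrite <- (sqrt_pow2 y) by lra. apply sqrt_lt_1; [lra|nra|]. simpl; lra.
Qed.

Lemma pX_minus C1 C2 b : 0 < 2*C1+C2 -> - / 2 * C1 ^ 2 - C1 * C2 < b < / 6 * (C1 - C2) ^ 2 ->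
  (C1 - C2)/3 < pX C1 C2 1 b < C1.
Proof.
  intros HK Hb. unfold pX.
  assert (0 < sqrt ((C1 - C2)^2 - 6 * b)) by (apply sqrt_lt_R0; lra).
  assert (sqrt ((C1 - C2)^2 - 6 * b) < 2*C1 + C2) by (apply sqrt_lt_sq; nra).
  lra.
Qed.

Lemma pX_plus C1 C2 b : 0 < 2*C1+C2 -> / 8 * (C2 ^ 2 - 4 * C1 * C2) < b < / 6 * (C1 - C2) ^ 2 ->
  -C2/2 < pX C1 C2 (-1) b < (C1 - C2)/3.
Proof.
  intros HK Hb. unfold pX.
  assert (0 < sqrt ((C1 - C2)^2 - 6 * b)) by (apply sqrt_lt_R0; lra).
  assert (sqrt ((C1 - C2)^2 - 6 * b) < (2*C1 + C2)/2) by (apply sqrt_lt_sq; nra).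
  lra.
Qed.

Lemma pX_Vf C1 C2 sg p : sg * sg = 1 -> 0 <= sg * (p - (C1 - C2)/3) -> pX C1 C2 sg (Vf C1 C2 p) = p.
Proof.
  intros Hs Hp. unfold pX, Vf.
  replace ((C1 - C2) ^ 2 - 6 * (p * (C1 - C2 - 3 / 2 * p))) with ((sg * (3 * p - (C1 - C2)))^2).
  2:{ transitivity ((sg * sg) * (3 * p - (C1 - C2))^2). ring. rewrite Hs. field. }
  rewrite sqrt_pow2 by nra.
  transitivity ((C1 - C2)/3 + (sg * sg) * (3 * p - (C1 - C2))/3). field. rewrite Hs. field.
Qed.

Lemma C3X_derive C1 C2 sg b : b < / 6 * (C1 - C2) ^ 2 ->
  is_derive (C3X C1 C2 sg) b (dg C1 C2 (pX C1 C2 sg b) * (- sg / sqrt ((C1 - C2)^2 - 6 * b))).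
Proof.
  intros Hb.
  assert (Hp : is_derive (pX C1 C2 sg) b (- sg / sqrt ((C1 - C2)^2 - 6 * b))).
  { unfold pX. auto_derive. lra. replace ((C1 - C2) * ((C1 - C2) * 1) + - (6 * b)) with ((C1 - C2)^2 - 6*b) by ring. field. apply Rgt_not_eq, sqrt_lt_R0. lra. }
  pose proof (is_derive_comp (cubicF C1 C2) (pX C1 C2 sg) b _ _ (cubic_derive C1 C2 _) Hp) as H.
  unfold scal in H; simpl in H; unfold mult in H; simpl in H.
  unfold C3X. rewrite Rmult_comm. exact H.
Qed.

Lemma C3X_C1 C1 C2 sg a : C1_on (C3X C1 C2 sg) a (/ 6 * (C1 - C2) ^ 2).
Proof.
  intros x Hx. split. eexists; apply C3X_derive; lra.
  apply continuous_ext_loc with (g := fun b => dg C1 C2 (pX C1 C2 sg b) * (- sg / sqrt ((C1 - C2)^2 - 6 * b))).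
  - assert (Hp : 0 < / 6 * (C1 - C2) ^ 2 - x) by lra.
    exists (mkposreal _ Hp). intros z Hz. apply ball_R in Hz. simpl in Hz.
    apply Rabs_def2 in Hz. unfold minus, plus, opp in Hz; simpl in Hz.
    symmetry; apply is_derive_unique, C3X_derive; lra.
  - apply cont_to_continuous. unfold dg, pX.
    assert (0 < sqrt ((C1 - C2)^2 - 6 * x)) by (apply sqrt_lt_R0; lra).
    assert (E : (fun b => 2 * ((C1 - C2) / 3 + sg * sqrt ((C1 - C2) ^ 2 - 6 * b) / 3 - C1) *
       (3 * ((C1 - C2) / 3 + sg * sqrt ((C1 - C2) ^ 2 - 6 * b) / 3) + C2 - C1) *
       (- sg / sqrt ((C1 - C2) ^ 2 - 6 * b))) =
      comp (fun s => 2 * ((C1 - C2) / 3 + sg * s / 3 - C1) * (3 * ((C1 - C2) / 3 + sg * s / 3) + C2 - C1) * (- sg / s))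
           (comp sqrt (fun b => (C1 - C2) ^ 2 - 6 * b))).
    { apply functional_extensionality; intros; reflexivity. }
    rewrite E. apply continuity_pt_comp.
    + apply continuity_pt_comp. reg. apply continuity_pt_sqrt. lra.
    + unfold comp. reg. lra.
Qed.


Lemma bminus_C1 C1 C2 : 0 < 2*C1+C2 -> C1_on (bminus C1 C2) 0 (C3crit C1 C2).
Proof.
  intros HK. apply (proj1 (C1_on_gen C1 C2 (phi2 C1 C2) (bminus C1 C2) ((C1-C2)/3) C1 HK
     (fun y Hy => phi2_spec C1 C2 y HK Hy) (fun y Hy => phi2_cont C1 C2 y HK Hy)
     ltac:(intros p Hp; unfold dg; assert (0 < (C1 - p) * (3*p+C2-C1)) by (apply Rmult_lt_0_compat; lra); lra)
     (fun y Hy => bminus_eq C1 C2 y HK Hy))).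
Qed.

Lemma bplus_C1 C1 C2 : 0 < 2*C1+C2 -> C1_on (bplus C1 C2) 0 (C3crit C1 C2).
Proof.
  intros HK. apply (proj1 (C1_on_gen C1 C2 (phi1 C1 C2) (bplus C1 C2) (-C2/2) ((C1-C2)/3) HK
     (fun y Hy => phi1_spec C1 C2 y HK Hy) (fun y Hy => phi1_cont C1 C2 y HK Hy)
     ltac:(intros p Hp; unfold dg; assert (0 < (C1 - p) * (C1 - C2 - 3*p)) by (apply Rmult_lt_0_compat; lra); lra)
     (fun y Hy => bplus_eq C1 C2 y HK Hy))).
Qed.

Lemma bminus_lim0 C1 C2 : 0 < 2*C1+C2 ->
  filterlim (bminus C1 C2) (at_right 0) (locally (- / 2 * C1 ^ 2 - C1 * C2)).
Proof.
  intros HK. apply (lim_Vf_right C1 C2 (phi2 C1 C2) _ 0 (C3crit C1 C2) C1).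
  apply C3crit_pos; auto. intros; apply bminus_eq; auto; lra.
  apply phi2_lim0; auto. unfold Vf; field.
Qed.

Lemma bplus_lim0 C1 C2 : 0 < 2*C1+C2 ->
  filterlim (bplus C1 C2) (at_right 0) (locally (/ 8 * (C2 ^ 2 - 4 * C1 * C2))).
Proof.
  intros HK. apply (lim_Vf_right C1 C2 (phi1 C1 C2) _ 0 (C3crit C1 C2) (-C2/2)).
  apply C3crit_pos; auto. intros; apply bplus_eq; auto; lra.
  apply phi1_lim0; auto. unfold Vf; field.
Qed.

Lemma bminus_limc C1 C2 : 0 < 2*C1+C2 ->
  filterlim (bminus C1 C2) (at_left (C3crit C1 C2)) (locally (/ 6 * (C1 - C2) ^ 2)).
Proof.
  intros HK. apply (lim_Vf_left C1 C2 (phi2 C1 C2) _ _ (C3crit C1 C2) ((C1-C2)/3)).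
  apply C3crit_pos; auto. intros; apply bminus_eq; auto; lra.
  apply phi2_limc; auto. unfold Vf; field.
Qed.

Lemma bplus_limc C1 C2 : 0 < 2*C1+C2 ->
  filterlim (bplus C1 C2) (at_left (C3crit C1 C2)) (locally (/ 6 * (C1 - C2) ^ 2)).
Proof.
  intros HK. apply (lim_Vf_left C1 C2 (phi1 C1 C2) _ _ (C3crit C1 C2) ((C1-C2)/3)).
  apply C3crit_pos; auto. intros; apply bplus_eq; auto; lra.
  apply phi1_limc; auto. unfold Vf; field.
Qed.

Lemma C3m_spec C1 C2 y : 0 < 2*C1+C2 -> - / 2 * C1 ^ 2 - C1 * C2 < y < / 6 * (C1 - C2) ^ 2 ->
  0 < C3X C1 C2 1 y < C3crit C1 C2 /\ bminus C1 C2 (C3X C1 C2 1 y) = y.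
Proof.
  intros HK Hy. pose proof (pX_minus C1 C2 y HK Hy) as Hp.
  assert (Hc : 0 < C3X C1 C2 1 y < C3crit C1 C2).
  { unfold C3X. rewrite <- (cubic_C1 C1 C2), <- (cubic_p0 C1 C2). split; apply cubic_decr; lra. }
  split; auto. rewrite bminus_eq by auto. unfold C3X. rewrite phi2_unique by auto.
  apply Vf_pX; lra.
Qed.

Lemma C3p_spec C1 C2 y : 0 < 2*C1+C2 -> / 8 * (C2 ^ 2 - 4 * C1 * C2) < y < / 6 * (C1 - C2) ^ 2 ->
  0 < C3X C1 C2 (-1) y < C3crit C1 C2 /\ bplus C1 C2 (C3X C1 C2 (-1) y) = y.
Proof.
  intros HK Hy. pose proof (pX_plus C1 C2 y HK Hy) as Hp.
  assert (Hc : 0 < C3X C1 C2 (-1) y < C3crit C1 C2).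
  { unfold C3X. rewrite <- (cubic_pm C1 C2), <- (cubic_p0 C1 C2). split; apply cubic_incr; lra. }
  split; auto. rewrite bplus_eq by auto. unfold C3X. rewrite phi1_unique by auto.
  apply Vf_pX; lra.
Qed.

Lemma C3m_inv C1 C2 x : 0 < 2*C1+C2 -> 0 < x < C3crit C1 C2 -> C3X C1 C2 1 (bminus C1 C2 x) = x.
Proof.
  intros HK Hx. rewrite bminus_eq by auto. destruct (phi2_spec C1 C2 x HK Hx) as [Hp Hf].
  unfold C3X. rewrite pX_Vf; [exact Hf|ring|lra].
Qed.

Lemma C3p_inv C1 C2 x : 0 < 2*C1+C2 -> 0 < x < C3crit C1 C2 -> C3X C1 C2 (-1) (bplus C1 C2 x) = x.
Proof.
  intros HK Hx. rewrite bplus_eq by auto. destruct (phi1_spec C1 C2 x HK Hx) as [Hp Hf].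
  unfold C3X. rewrite pX_Vf; [exact Hf|ring|lra].
Qed.

Lemma bminus_bounds C1 C2 x : 0 < 2*C1+C2 -> 0 < x < C3crit C1 C2 ->
  - / 2 * C1 ^ 2 - C1 * C2 < bminus C1 C2 x.
Proof.
  intros HK Hx. rewrite bminus_eq by auto. destruct (phi2_spec C1 C2 x HK Hx) as [Hp Hf].
  replace (- / 2 * C1 ^ 2 - C1 * C2) with (Vf C1 C2 C1) by (unfold Vf; field).
  apply Vf_decr; lra.
Qed.

Lemma bplus_bounds C1 C2 x : 0 < 2*C1+C2 -> 0 < x < C3crit C1 C2 ->
  / 8 * (C2 ^ 2 - 4 * C1 * C2) < bplus C1 C2 x < / 6 * (C1 - C2) ^ 2.
Proof.
  intros HK Hx. rewrite bplus_eq by auto. destruct (phi1_spec C1 C2 x HK Hx) as [Hp Hf].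
  replace (/ 8 * (C2 ^ 2 - 4 * C1 * C2)) with (Vf C1 C2 (-C2/2)) by (unfold Vf; field).
  replace (/ 6 * (C1 - C2) ^ 2) with (Vf C1 C2 ((C1-C2)/3)) by (unfold Vf; field).
  split; apply Vf_incr; lra.
Qed.

Lemma region_iff C1 C2 C3 b : 0 < 2*C1+C2 ->
  (0 < C3 < C3crit C1 C2 /\ bminus C1 C2 C3 < b < bplus C1 C2 C3) <->
  (- / 2 * C1 ^ 2 - C1 * C2 < b < / 6 * (C1 - C2) ^ 2 /\
   C3 < C3X C1 C2 1 b /\
   (b <= / 8 * (C2 ^ 2 - 4 * C1 * C2) -> 0 < C3) /\
   (/ 8 * (C2 ^ 2 - 4 * C1 * C2) < b -> C3X C1 C2 (-1) b < C3)).
Proof.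
  intros HK. pose proof (bminus_incr C1 C2 HK) as Im. pose proof (bplus_incr C1 C2 HK) as Ip.
  split.
  - intros [HC Hb].
    pose proof (bminus_bounds C1 C2 C3 HK HC). pose proof (bplus_bounds C1 C2 C3 HK HC).
    assert (Hbr : - / 2 * C1 ^ 2 - C1 * C2 < b < / 6 * (C1 - C2) ^ 2) by lra.
    split; [exact Hbr|]. split; [|split].
    + destruct (C3m_spec C1 C2 b HK Hbr) as [Hc1 Hc2].
      destruct (Rlt_or_le C3 (C3X C1 C2 1 b)) as [E|E]; auto.
      destruct (Rle_lt_or_eq_dec _ _ E) as [E'|E'].
      * pose proof (Im _ _ (proj1 Hc1) E' (proj2 HC)). lra.
      * rewrite E' in Hc2. lra.
    + intros; lra.
    + intros Hl. destruct (C3p_spec C1 C2 b HK ltac:(lra)) as [Hc1 Hc2].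
      destruct (Rlt_or_le (C3X C1 C2 (-1) b) C3) as [E|E]; auto.
      destruct (Rle_lt_or_eq_dec _ _ E) as [E'|E'].
      * pose proof (Ip _ _ (proj1 HC) E' (proj2 Hc1)). lra.
      * rewrite <- E' in Hc2. lra.
  - intros [Hbr [H1 [H2 H3]]].
    destruct (C3m_spec C1 C2 b HK Hbr) as [Hc1 Hc2].
    assert (HC3 : 0 < C3).
    { destruct (Rle_or_lt b (/ 8 * (C2 ^ 2 - 4 * C1 * C2))) as [E|E]; auto.
      destruct (C3p_spec C1 C2 b HK ltac:(lra)) as [Hd1 Hd2]. specialize (H3 E). lra. }
    assert (HC : 0 < C3 < C3crit C1 C2) by lra.
    split; [exact HC|]. split.
    + apply Rlt_le_trans with (bminus C1 C2 (C3X C1 C2 1 b)); [apply Im; lra|lra].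
    + destruct (Rle_or_lt b (/ 8 * (C2 ^ 2 - 4 * C1 * C2))) as [E|E].
      * pose proof (bplus_bounds C1 C2 C3 HK HC). lra.
      * destruct (C3p_spec C1 C2 b HK ltac:(lra)) as [Hd1 Hd2]. specialize (H3 E).
        apply Rle_lt_trans with (bplus C1 C2 (C3X C1 C2 (-1) b)); [lra|apply Ip; lra].
Qed.

Lemma part1 C1 C2 : 0 < 2 * C1 + C2 ->
    C1_on (bminus C1 C2) 0 (C3crit C1 C2) /\
    C1_on (bplus C1 C2) 0 (C3crit C1 C2) /\
    strictly_increasing_on (bminus C1 C2) 0 (C3crit C1 C2) /\
    strictly_increasing_on (bplus C1 C2) 0 (C3crit C1 C2) /\
    filterlim (bminus C1 C2) (at_right 0)
      (locally (- / 2 * C1 ^ 2 - C1 * C2)) /\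
    filterlim (bminus C1 C2) (at_left (C3crit C1 C2))
      (locally (/ 6 * (C1 - C2) ^ 2)) /\
    filterlim (bplus C1 C2) (at_right 0)
      (locally (/ 8 * (C2 ^ 2 - 4 * C1 * C2))) /\
    filterlim (bplus C1 C2) (at_left (C3crit C1 C2))
      (locally (/ 6 * (C1 - C2) ^ 2)) /\
    (exists C3m C3p : R -> R,
       C1_inverse (bminus C1 C2) C3m 0 (C3crit C1 C2)
         (- / 2 * C1 ^ 2 - C1 * C2) (/ 6 * (C1 - C2) ^ 2) /\
       C1_inverse (bplus C1 C2) C3p 0 (C3crit C1 C2)
         (/ 8 * (C2 ^ 2 - 4 * C1 * C2)) (/ 6 * (C1 - C2) ^ 2) /\
       (forall C3 b : R,
          (0 < C3 < C3crit C1 C2 /\ bminus C1 C2 C3 < b < bplus C1 C2 C3) <->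
          (- / 2 * C1 ^ 2 - C1 * C2 < b < / 6 * (C1 - C2) ^ 2 /\
           C3 < C3m b /\
           (b <= / 8 * (C2 ^ 2 - 4 * C1 * C2) -> 0 < C3) /\
           (/ 8 * (C2 ^ 2 - 4 * C1 * C2) < b -> C3p b < C3)))).
Proof.
  intros HK.
  split; [apply bminus_C1; auto|]. split; [apply bplus_C1; auto|].
  split; [apply bminus_incr; auto|]. split; [apply bplus_incr; auto|].
  split; [apply bminus_lim0; auto|]. split; [apply bminus_limc; auto|].
  split; [apply bplus_lim0; auto|]. split; [apply bplus_limc; auto|].
  exists (C3X C1 C2 1), (C3X C1 C2 (-1)). split; [|split].
  - split; [intros; apply C3m_spec; auto|]. split; [intros; apply C3m_inv; auto|]. apply C3X_C1.
  - split; [intros; apply C3p_spec; auto|]. split; [intros; apply C3p_inv; auto|]. apply C3X_C1.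
  - intros; apply region_iff; auto.
Qed.


Definition Qp C1 C2 C3 b x := -(x^3 - (C1-C2)*x^2 + 2*b*x - 2*b*C1 - C1^2*C2 + C3).

Lemma Qp_U C1 C2 C3 b x : x <> C1 -> Qp C1 C2 C3 b x = 2 * (C1 - x) * (b - U C1 C2 C3 x).
Proof. intros. unfold Qp, U. field. lra. Qed.

Lemma roots C1 C2 C3 b : 0 < 2*C1+C2 -> 0 < C3 < C3crit C1 C2 ->
  bminus C1 C2 C3 < b < bplus C1 C2 C3 ->
  exists xa xb xc, xc < xa < xb /\ xb < C1 /\ C2 = C1 - xa - xb - xc /\
    b = (xa*xb + xa*xc + xb*xc)/2 /\ C3 = 2*b*C1 + C1^2*C2 - xa*xb*xc.
Proof.
  intros HK HC Hb.
  destruct (phi1_spec C1 C2 C3 HK HC) as [H1 _].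
  destruct (phi2_spec C1 C2 C3 HK HC) as [H2 _].
  set (p1 := phi1 C1 C2 C3) in *. set (p2 := phi2 C1 C2 C3) in *.
  assert (Q1 : Qp C1 C2 C3 b p1 < 0).
  { rewrite Qp_U by lra. unfold bplus in Hb. fold p1 in Hb.
    assert (0 < 2 * (C1 - p1) * (U C1 C2 C3 p1 - b)) by (apply Rmult_lt_0_compat; lra). lra. }
  assert (Q2 : 0 < Qp C1 C2 C3 b p2).
  { rewrite Qp_U by lra. unfold bminus in Hb. fold p2 in Hb.
    apply Rmult_lt_0_compat; lra. }
  assert (Q3 : Qp C1 C2 C3 b C1 < 0) by (unfold Qp; ring_simplify; lra).
  assert (Hc : continuity (Qp C1 C2 C3 b)) by (unfold Qp; reg).
  destruct (IVT_gen _ p1 p2 0 Hc) as [xa [Hxa Qa]].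
  { rewrite Rmin_left, Rmax_right; lra. }
  destruct (IVT_gen _ p2 C1 0 Hc) as [xb [Hxb Qb]].
  { rewrite Rmin_right, Rmax_left; lra. }
  rewrite Rmin_left, Rmax_right in Hxa, Hxb by lra.
  assert (Ha : p1 < xa < p2).
  { split; [destruct (Rle_lt_or_eq_dec _ _ (proj1 Hxa)) as [E|E]; auto; subst; lra|].
    destruct (Rle_lt_or_eq_dec _ _ (proj2 Hxa)) as [E|E]; auto; subst; lra. }
  assert (Hb' : p2 < xb < C1).
  { split; [destruct (Rle_lt_or_eq_dec _ _ (proj1 Hxb)) as [E|E]; auto; subst; lra|].
    destruct (Rle_lt_or_eq_dec _ _ (proj2 Hxb)) as [E|E]; auto; subst; lra. }
  set (xc := C1 - C2 - xa - xb).
  assert (HS : (xa - xb) * (xa^2 + xa*xb + xb^2 - (C1-C2)*(xa+xb) + 2*b) = 0).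
  { transitivity (Qp C1 C2 C3 b xb - Qp C1 C2 C3 b xa).
    unfold Qp; ring. rewrite Qa, Qb. ring. }
  apply Rmult_integral in HS. destruct HS as [HS|HS]; [lra|].
  assert (E2 : 2 * b = xa*xb + xa*xc + xb*xc).
  { unfold xc. assert (HH : 2*b = -(xa^2 + xa*xb + xb^2) + (C1-C2)*(xa+xb)) by lra.
    rewrite HH. ring. }
  assert (E3 : C3 = 2*b*C1 + C1^2*C2 - xa*xb*xc).
  { unfold Qp in Qa. assert (C3 = xa^3 - (C1-C2)*xa^2 + 2*b*xa - 2*b*C1 - C1^2*C2 + C3 - xa^3 + (C1-C2)*xa^2 - 2*b*xa + 2*b*C1 + C1^2*C2) by ring.
    assert (xa^3 - (C1-C2)*xa^2 + 2*b*xa - 2*b*C1 - C1^2*C2 + C3 = 0) by lra.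
    assert (HH : C3 = - xa^3 + (C1-C2)*xa^2 - 2*b*xa + 2*b*C1 + C1^2*C2) by lra.
    rewrite HH. rewrite E2. unfold xc. ring. }
  assert (Hfac : forall x, Qp C1 C2 C3 b x = (x - xa) * (xb - x) * (x - xc)).
  { intros x. unfold Qp. rewrite E3.
    replace (2*b*x) with ((xa*xb + xa*xc + xb*xc)*x) by (rewrite <- E2; ring).
    replace (2*b*C1) with ((xa*xb + xa*xc + xb*xc)*C1) by (rewrite <- E2; ring).
    unfold xc. ring. }
  assert (Hxc : xc < p1).
  { rewrite Hfac in Q1.
    assert (0 < (xa - p1) * (xb - p1)) by (apply Rmult_lt_0_compat; lra).
    destruct (Rlt_or_le xc p1) as [E|E]; auto.
    assert (0 <= (xa - p1) * (xb - p1) * (xc - p1)) by (apply Rmult_le_pos; lra).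
    assert ((p1 - xa) * (xb - p1) * (p1 - xc) = (xa - p1) * (xb - p1) * (xc - p1)) by ring.
    lra. }
  exists xa, xb, xc. split; [lra|]. split; [lra|]. split; [unfold xc; ring|].
  split; [lra|]. exact E3.
Qed.


Definition Am xa xb t := (xa+xb)/2 + (xb-xa)/2 * cos t.
Definition w2f xa xb xc C1 al t := (Am xa xb t - xc) / (al^2 * (C1 - Am xa xb t)).
Definition wf xa xb xc C1 al t := sqrt (w2f xa xb xc C1 al t).
Definition wi xa xb xc C1 al t := / wf xa xb xc C1 al t.
Definition Xi xa xb xc C1 al th := RInt (wi xa xb xc C1 al) 0 th.
Definition dw2 xa xb xc C1 al t :=
  (- ((xb-xa)/2) * sin t) * (C1 - xc) / (al^2 * (C1 - Am xa xb t)^2).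

Lemma Am_bounds xa xb t : xa < xb -> xa <= Am xa xb t <= xb.
Proof. intros. unfold Am. pose proof (COS_bound t). nra. Qed.

Lemma w2_pos xa xb xc C1 al t : xc < xa < xb -> xb < C1 -> 0 < al ->
  0 < w2f xa xb xc C1 al t <= (xb - xc) / (al^2 * (C1 - xb)).
Proof.
  intros H1 H2 H3. pose proof (Am_bounds xa xb t ltac:(lra)) as HA. unfold w2f.
  set (A := Am xa xb t) in *.
  assert (0 < al^2) by (apply pow_lt; lra).
  split.
  - apply Rdiv_lt_0_compat; [lra|]. apply Rmult_lt_0_compat; lra.
  - unfold Rdiv. apply Rmult_le_compat; try lra.
    + apply Rlt_le, Rinv_0_lt_compat, Rmult_lt_0_compat; lra.
    + apply Rinv_le_contravar. apply Rmult_lt_0_compat; lra.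
      apply Rmult_le_compat_l; lra.
Qed.

Lemma wf_pos xa xb xc C1 al t : xc < xa < xb -> xb < C1 -> 0 < al -> 0 < wf xa xb xc C1 al t.
Proof. intros. unfold wf. apply sqrt_lt_R0, w2_pos; auto. Qed.

Lemma wi_lower xa xb xc C1 al t : xc < xa < xb -> xb < C1 -> 0 < al ->
  / sqrt ((xb - xc) / (al^2 * (C1 - xb))) <= wi xa xb xc C1 al t.
Proof.
  intros. unfold wi. pose proof (w2_pos xa xb xc C1 al t H H0 H1) as [P1 P2].
  apply Rinv_le_contravar. apply wf_pos; auto.
  unfold wf. apply sqrt_le_1; lra.
Qed.

Lemma Cn_Am xa xb n : Cn n (Am xa xb).
Proof.
  unfold Am. apply Cn_plus. apply Cn_const. apply Cn_scal. apply (proj1 (Cn_cos_sin n)).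
Qed.

Lemma smooth_wf xa xb xc C1 al : xc < xa < xb -> xb < C1 -> 0 < al -> smooth' (wf xa xb xc C1 al).
Proof.
  intros H1 H2 H3 n. unfold wf. apply Cn_sqrt.
  - unfold w2f. apply Cn_mult.
    + apply Cn_plus. apply Cn_Am. apply Cn_const.
    + apply Cn_inv. apply Cn_mult. apply Cn_const. apply Cn_plus. apply Cn_const. apply Cn_opp, Cn_Am.
      intros x. pose proof (Am_bounds xa xb x ltac:(lra)). apply Rmult_integral_contrapositive.
      split; [apply pow_nonzero; lra|lra].
  - intros; apply w2_pos; auto.
Qed.

Lemma wi_cont xa xb xc C1 al t : xc < xa < xb -> xb < C1 -> 0 < al ->
  continuous (wi xa xb xc C1 al) t.
Proof.
  intros H1 H2 H3. apply (@ex_derive_continuous R_AbsRing R_NormedModule). unfold wi.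
  apply ex_derive_inv. 2: apply Rgt_not_eq, wf_pos; auto.
  exact (smooth_wf xa xb xc C1 al H1 H2 H3 1%nat 1%nat t ltac:(lia)).
Qed.

Lemma Xi_derive xa xb xc C1 al th : xc < xa < xb -> xb < C1 -> 0 < al ->
  is_derive (Xi xa xb xc C1 al) th (wi xa xb xc C1 al th).
Proof.
  intros H1 H2 H3. unfold Xi. apply (is_derive_RInt (wi xa xb xc C1 al) (fun b => RInt (wi xa xb xc C1 al) 0 b) 0 th).
  - exists (mkposreal 1 Rlt_0_1). intros y _. apply (@RInt_correct R_CompleteNormedModule).
    apply (@ex_RInt_continuous R_CompleteNormedModule). intros; apply wi_cont; auto.
  - apply wi_cont; auto.
Qed.

Lemma Xi_cont xa xb xc C1 al th : xc < xa < xb -> xb < C1 -> 0 < al ->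
  continuity_pt (Xi xa xb xc C1 al) th.
Proof.
  intros. apply continuity_pt_filterlim. apply (@ex_derive_continuous R_AbsRing R_NormedModule).
  eexists; apply Xi_derive; auto.
Qed.

Lemma Xi_0 xa xb xc C1 al : Xi xa xb xc C1 al 0 = 0.
Proof. unfold Xi. rewrite RInt_point. reflexivity. Qed.

Lemma Xi_lower xa xb xc C1 al x y : xc < xa < xb -> xb < C1 -> 0 < al -> x <= y ->
  / sqrt ((xb - xc) / (al^2 * (C1 - xb))) * (y - x) <= Xi xa xb xc C1 al y - Xi xa xb xc C1 al x.
Proof.
  intros H1 H2 H3 Hxy.
  destruct (MVT_gen (Xi xa xb xc C1 al) x y (wi xa xb xc C1 al)) as [c [Hc E]].
  - intros; apply Xi_derive; auto.
  - intros; apply Xi_cont; auto.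
  - rewrite E. apply Rmult_le_compat_r; [lra|]. apply wi_lower; auto.
Qed.


Definition thf xa xb xc C1 al y := epsilon (inhabits 0) (fun t => Xi xa xb xc C1 al t = y).

Lemma Xi_strict xa xb xc C1 al x y : xc < xa < xb -> xb < C1 -> 0 < al -> x < y ->
  Xi xa xb xc C1 al x < Xi xa xb xc C1 al y.
Proof.
  intros H1 H2 H3 H. pose proof (Xi_lower xa xb xc C1 al x y H1 H2 H3 ltac:(lra)).
  assert (0 < / sqrt ((xb - xc) / (al ^ 2 * (C1 - xb)))).
  { apply Rinv_0_lt_compat, sqrt_lt_R0. apply Rdiv_lt_0_compat; [lra|].
    apply Rmult_lt_0_compat; [apply pow_lt|]; lra. }
  assert (0 < / sqrt ((xb - xc) / (al ^ 2 * (C1 - xb))) * (y - x)) by (apply Rmult_lt_0_compat; lra).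
  lra.
Qed.

Lemma thf_spec xa xb xc C1 al y : xc < xa < xb -> xb < C1 -> 0 < al ->
  Xi xa xb xc C1 al (thf xa xb xc C1 al y) = y.
Proof.
  intros H1 H2 H3. unfold thf. apply epsilon_spec.
  set (c0 := / sqrt ((xb - xc) / (al ^ 2 * (C1 - xb)))).
  assert (Hc0 : 0 < c0).
  { apply Rinv_0_lt_compat, sqrt_lt_R0. apply Rdiv_lt_0_compat; [lra|].
    apply Rmult_lt_0_compat; [apply pow_lt|]; lra. }
  set (L := Rabs y / c0).
  assert (HL : 0 <= L) by (unfold L; apply Rmult_le_pos; [apply Rabs_pos|apply Rlt_le, Rinv_0_lt_compat; lra]).
  assert (HcL : c0 * L = Rabs y) by (unfold L; field; lra).
  pose proof (Xi_lower xa xb xc C1 al 0 L H1 H2 H3 HL) as A1.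
  pose proof (Xi_lower xa xb xc C1 al (-L) 0 H1 H2 H3 ltac:(lra)) as A2.
  fold c0 in A1, A2. rewrite Xi_0 in A1, A2.
  pose proof (Rle_abs y). pose proof (Rle_abs (-y)). rewrite Rabs_Ropp in H0.
  destruct (IVT_gen (Xi xa xb xc C1 al) (-L) L y) as [t [_ Ht]].
  - intros x; apply Xi_cont; auto.
  - assert (Xi xa xb xc C1 al (-L) <= Xi xa xb xc C1 al L) by nra.
    rewrite Rmin_left, Rmax_right by lra. split; nra.
  - exists t; exact Ht.
Qed.

Lemma thf_Xi xa xb xc C1 al t : xc < xa < xb -> xb < C1 -> 0 < al ->
  thf xa xb xc C1 al (Xi xa xb xc C1 al t) = t.
Proof.
  intros H1 H2 H3. pose proof (thf_spec xa xb xc C1 al (Xi xa xb xc C1 al t) H1 H2 H3) as E.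
  set (u := thf xa xb xc C1 al (Xi xa xb xc C1 al t)) in *.
  destruct (Rtotal_order u t) as [L|[L|L]]; auto.
  - pose proof (Xi_strict xa xb xc C1 al _ _ H1 H2 H3 L). lra.
  - pose proof (Xi_strict xa xb xc C1 al _ _ H1 H2 H3 L). lra.
Qed.

Lemma thf_cont xa xb xc C1 al y0 : xc < xa < xb -> xb < C1 -> 0 < al ->
  continuity_pt (thf xa xb xc C1 al) y0.
Proof.
  intros H1 H2 H3.
  set (t0 := thf xa xb xc C1 al y0).
  apply (inv_cont_incr (Xi xa xb xc C1 al) (thf xa xb xc C1 al) (t0 - 1) (t0 + 1)
           (Xi xa xb xc C1 al (t0 - 1)) (Xi xa xb xc C1 al (t0 + 1))).
  - intros; apply Xi_strict; auto.
  - intros y Hy. pose proof (thf_spec xa xb xc C1 al y H1 H2 H3) as E. split; auto.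
    set (u := thf xa xb xc C1 al y) in *. split.
    + destruct (Rlt_or_le (t0 - 1) u) as [L|L]; auto.
      destruct (Rle_lt_or_eq_dec _ _ L) as [L'|L'].
      * pose proof (Xi_strict xa xb xc C1 al _ _ H1 H2 H3 L'). lra.
      * rewrite L' in E. lra.
    + destruct (Rlt_or_le u (t0 + 1)) as [L|L]; auto.
      destruct (Rle_lt_or_eq_dec _ _ L) as [L'|L'].
      * pose proof (Xi_strict xa xb xc C1 al _ _ H1 H2 H3 L'). lra.
      * rewrite <- L' in E. lra.
  - pose proof (thf_spec xa xb xc C1 al y0 H1 H2 H3) as E. fold t0 in E.
    pose proof (Xi_strict xa xb xc C1 al (t0-1) t0 H1 H2 H3 ltac:(lra)).
    pose proof (Xi_strict xa xb xc C1 al t0 (t0+1) H1 H2 H3 ltac:(lra)). lra.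
Qed.

Lemma thf_derive xa xb xc C1 al y : xc < xa < xb -> xb < C1 -> 0 < al ->
  is_derive (thf xa xb xc C1 al) y (wf xa xb xc C1 al (thf xa xb xc C1 al y)).
Proof.
  intros H1 H2 H3.
  replace (wf xa xb xc C1 al (thf xa xb xc C1 al y)) with (/ wi xa xb xc C1 al (thf xa xb xc C1 al y)).
  2:{ unfold wi. rewrite Rinv_inv. reflexivity. }
  apply (inv_derive (Xi xa xb xc C1 al) _ y _ 1 Rlt_0_1).
  - intros; apply thf_spec; auto.
  - apply thf_cont; auto.
  - apply Xi_derive; auto.
  - unfold wi. apply Rgt_not_eq, Rinv_0_lt_compat, wf_pos; auto.
Qed.

Lemma Am_per xa xb t : Am xa xb (t + 2 * PI) = Am xa xb t.
Proof. unfold Am. rewrite cos_plus, cos_2PI, sin_2PI. ring. Qed.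

Lemma Xi_per xa xb xc C1 al t : xc < xa < xb -> xb < C1 -> 0 < al ->
  Xi xa xb xc C1 al (t + 2 * PI) = Xi xa xb xc C1 al t + Xi xa xb xc C1 al (2 * PI).
Proof.
  intros H1 H2 H3.
  set (H := fun t => Xi xa xb xc C1 al (t + 2 * PI) - Xi xa xb xc C1 al t).
  assert (Hd : forall t, is_derive H t 0).
  { intros s. unfold H.
    replace 0 with (1 * wi xa xb xc C1 al (s + 2 * PI) - wi xa xb xc C1 al s).
    2:{ unfold wi, wf, w2f. rewrite Am_per. ring. }
    apply (is_derive_minus (fun t => Xi xa xb xc C1 al (t + 2 * PI)) (Xi xa xb xc C1 al)).
    - apply (is_derive_comp (Xi xa xb xc C1 al) (fun t => t + 2 * PI)).
      apply Xi_derive; auto. auto_derive; auto.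
    - apply Xi_derive; auto. }
  destruct (MVT_gen H 0 t (fun _ => 0)) as [c [_ E]].
  - intros; apply Hd.
  - intros. apply continuity_pt_filterlim. apply (@ex_derive_continuous R_AbsRing R_NormedModule).
    eexists; apply Hd.
  - unfold H in E. rewrite Xi_0 in E. replace (0 + 2 * PI) with (2 * PI) in E by ring. lra.
Qed.

Lemma alg_E2 xa xb xc C1 al c s W :
  0 < al -> C1 - ((xa+xb)/2 + (xb-xa)/2 * c) <> 0 ->
  W * W = ((xa+xb)/2 + (xb-xa)/2 * c - xc) / (al^2 * (C1 - ((xa+xb)/2 + (xb-xa)/2 * c))) ->
  s^2 + c^2 = 1 ->
  let C2 := C1 - xa - xb - xc in
  let b := (xa*xb + xa*xc + xb*xc)/2 in
  let C3 := 2*b*C1 + C1^2*C2 - xa*xb*xc in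
  let ph := (xa+xb)/2 + (xb-xa)/2 * c in
  al ^ 2 * (ph - C1) * (- ((xb-xa)/2) * s * W) ^ 2
    + (C1 - C2) * ph ^ 2 - ph ^ 3 - 2 * b * ph + C1 * (2 * b + C1 * C2) = C3.
Proof.
  intros Hal Hne HW Hsc C2 b C3 ph.
  replace ((- ((xb-xa)/2) * s * W) ^ 2) with (((xb-xa)/2)^2 * s^2 * (W * W)) by ring.
  rewrite HW. replace (s^2) with (1 - c^2) by lra.
  unfold C3, b, C2, ph. field. split; lra.
Qed.

Lemma alg_E1 xa xb xc C1 al c s W :
  0 < al -> C1 - ((xa+xb)/2 + (xb-xa)/2 * c) <> 0 ->
  W * W = ((xa+xb)/2 + (xb-xa)/2 * c - xc) / (al^2 * (C1 - ((xa+xb)/2 + (xb-xa)/2 * c))) ->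
  s^2 + c^2 = 1 ->
  let C2 := C1 - xa - xb - xc in
  let b := (xa*xb + xa*xc + xb*xc)/2 in
  let r := (xb-xa)/2 in
  let ph := (xa+xb)/2 + r * c in
  let ph2 := - r * c * (W * W) - r * s * ((- r * s) * (C1 - xc) / (al^2 * (C1 - ph)^2)) / 2 in
  al ^ 2 * (ph - C1) * ph2 + / 2 * al ^ 2 * (- r * s * W) ^ 2
    + (C1 - C2 - 3 / 2 * ph) * ph = b.
Proof.
  intros Hal Hne HW Hsc C2 b r ph ph2.
  unfold ph2.
  replace ((- r * s * W) ^ 2) with (r^2 * s^2 * (W * W)) by ring.
  replace (- r * c * (W * W) - r * s * (- r * s * (C1 - xc) / (al ^ 2 * (C1 - ph) ^ 2)) / 2)
    with (- r * c * (W * W) + r^2 * s^2 * (C1 - xc) / (al ^ 2 * (C1 - ph) ^ 2) / 2).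
  2:{ field. split; [unfold ph, r; lra|lra]. }
  rewrite HW. replace (s^2) with (1 - c^2) by lra.
  unfold b, C2, ph, r. field. split; lra.
Qed.

Lemma alg_E2' xa xb xc C1 al C2 b C3 ph D c s W :
  0 < al -> C1 - ph <> 0 -> ph = (xa+xb)/2 + (xb-xa)/2 * c ->
  D = - ((xb-xa)/2) * s * W -> W * W = (ph - xc) / (al^2 * (C1 - ph)) -> s^2 + c^2 = 1 ->
  C2 = C1 - xa - xb - xc -> b = (xa*xb + xa*xc + xb*xc)/2 -> C3 = 2*b*C1 + C1^2*C2 - xa*xb*xc ->
  al ^ 2 * (ph - C1) * D ^ 2 + (C1 - C2) * ph ^ 2 - ph ^ 3 - 2 * b * ph + C1 * (2 * b + C1 * C2) = C3.
Proof.
  intros Hal Hne Hph HD HW Hsc HC2 Hb HC3. subst C3. subst b. subst C2. subst D. subst ph.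
  exact (alg_E2 xa xb xc C1 al c s W Hal Hne HW Hsc).
Qed.

Lemma alg_E1' xa xb xc C1 al C2 b ph D DD c s W :
  0 < al -> C1 - ph <> 0 -> ph = (xa+xb)/2 + (xb-xa)/2 * c ->
  D = - ((xb-xa)/2) * s * W -> W * W = (ph - xc) / (al^2 * (C1 - ph)) -> s^2 + c^2 = 1 ->
  DD = - ((xb-xa)/2) * c * (W * W) - ((xb-xa)/2) * s * ((- ((xb-xa)/2) * s) * (C1 - xc) / (al^2 * (C1 - ph)^2)) / 2 ->
  C2 = C1 - xa - xb - xc -> b = (xa*xb + xa*xc + xb*xc)/2 ->
  al ^ 2 * (ph - C1) * DD + / 2 * al ^ 2 * D ^ 2 + (C1 - C2 - 3 / 2 * ph) * ph = b.
Proof.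
  intros Hal Hne Hph HD HW Hsc HDD HC2 Hb. subst b. subst C2. subst D. subst DD. subst ph.
  exact (alg_E1 xa xb xc C1 al c s W Hal Hne HW Hsc).
Qed.

Definition sol xa xb xc C1 al y := Am xa xb (thf xa xb xc C1 al y).

Lemma Am_derive xa xb t : is_derive (Am xa xb) t (- ((xb-xa)/2) * sin t).
Proof. unfold Am. auto_derive; auto. ring. Qed.

Lemma w2_derive xa xb xc C1 al t : xc < xa < xb -> xb < C1 -> 0 < al ->
  is_derive (w2f xa xb xc C1 al) t (dw2 xa xb xc C1 al t).
Proof.
  intros H1 H2 H3. pose proof (Am_bounds xa xb t ltac:(lra)) as HA.
  unfold w2f, dw2. unfold Am in *. auto_derive.
  - assert (0 < al * al) by nra. apply Rgt_not_eq. apply Rmult_lt_0_compat; lra.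
  - assert (0 < al * al) by nra. field. split; lra.
Qed.

Lemma wf_derive xa xb xc C1 al t : xc < xa < xb -> xb < C1 -> 0 < al ->
  is_derive (wf xa xb xc C1 al) t (dw2 xa xb xc C1 al t / (2 * wf xa xb xc C1 al t)).
Proof.
  intros H1 H2 H3. unfold wf.
  apply (is_derive_sqrt (w2f xa xb xc C1 al) t). apply w2_derive; auto.
  apply w2_pos; auto.
Qed.

Definition Gf xa xb xc C1 al t := - ((xb-xa)/2) * sin t * wf xa xb xc C1 al t.

Lemma Gf_derive xa xb xc C1 al t : xc < xa < xb -> xb < C1 -> 0 < al ->
  is_derive (Gf xa xb xc C1 al) t
   (- ((xb-xa)/2) * cos t * wf xa xb xc C1 al t + - ((xb-xa)/2) * sin t * (dw2 xa xb xc C1 al t / (2 * wf xa xb xc C1 al t))).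
Proof.
  intros H1 H2 H3. unfold Gf.
  apply (is_derive_mult (fun t => - ((xb-xa)/2) * sin t) (wf xa xb xc C1 al)).
  - auto_derive; auto. ring.
  - apply wf_derive; auto.
  - intros; apply Rmult_comm.
Qed.

Lemma sol_derive xa xb xc C1 al x : xc < xa < xb -> xb < C1 -> 0 < al ->
  is_derive (sol xa xb xc C1 al) x (Gf xa xb xc C1 al (thf xa xb xc C1 al x)).
Proof.
  intros H1 H2 H3. unfold sol, Gf.
  pose proof (is_derive_comp (Am xa xb) (thf xa xb xc C1 al) x _ _ (Am_derive xa xb _) (thf_derive xa xb xc C1 al x H1 H2 H3)) as H.
  unfold scal in H; simpl in H; unfold mult in H; simpl in H.
  rewrite Rmult_comm. exact H.
Qed.

Lemma Derive_sol xa xb xc C1 al : xc < xa < xb -> xb < C1 -> 0 < al ->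
  Derive (sol xa xb xc C1 al) = fun x => Gf xa xb xc C1 al (thf xa xb xc C1 al x).
Proof.
  intros H1 H2 H3. apply functional_extensionality. intros x.
  apply is_derive_unique, sol_derive; auto.
Qed.


Lemma Derive_of (f : R -> R) x l : is_derive f x l -> Derive f x = l.
Proof. apply is_derive_unique. Qed.

Lemma sol_good alpha C1 C2 C3 b xa xb xc : 0 < alpha ->
  xc < xa < xb -> xb < C1 -> C2 = C1 - xa - xb - xc ->
  b = (xa*xb + xa*xc + xb*xc)/2 -> C3 = 2*b*C1 + C1^2*C2 - xa*xb*xc ->
  smooth_periodic_solution alpha C1 C2 C3 b (sol xa xb xc C1 alpha).
Proof.
  intros Hal H1 H2 HC2 Hb HC3.
  set (phi := sol xa xb xc C1 alpha).
  assert (Hth := thf_derive xa xb xc C1 alpha).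
  split; [|split; [|split; [|split]]].
  -
    intros n x.
    assert (Hc : Cn n phi).
    { apply (Cn_flow (thf xa xb xc C1 alpha) (wf xa xb xc C1 alpha)).
      intros; apply Hth; auto. apply smooth_wf; auto. intros k; apply Cn_Am. }
    apply Hc. lia.
  -
    exists (Xi xa xb xc C1 alpha (2 * PI)). split.
    + rewrite <- (Xi_0 xa xb xc C1 alpha). apply Xi_strict; auto. pose proof PI_RGT_0. lra.
    + intros x. unfold phi, sol.
      replace (x + Xi xa xb xc C1 alpha (2 * PI)) with (Xi xa xb xc C1 alpha (thf xa xb xc C1 alpha x + 2 * PI)).
      * rewrite thf_Xi by auto. apply Am_per.
      * rewrite Xi_per by auto. rewrite thf_spec by auto. reflexivity.
  -
    exists 0, (Xi xa xb xc C1 alpha PI). unfold phi, sol.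
    rewrite <- (Xi_0 xa xb xc C1 alpha) at 1. rewrite !thf_Xi by auto.
    unfold Am. rewrite cos_0, cos_PI. lra.
  -
    intros x. change (Derive_n phi 2 x) with (Derive (Derive phi) x). unfold phi.
    set (t := thf xa xb xc C1 alpha x).
    assert (HA := Am_bounds xa xb t ltac:(lra)).
    assert (HW := wf_pos xa xb xc C1 alpha t H1 H2 Hal).
    assert (HW2 : wf xa xb xc C1 alpha t * wf xa xb xc C1 alpha t = w2f xa xb xc C1 alpha t).
    { unfold wf. apply sqrt_sqrt. apply Rlt_le, w2_pos; auto. }
    rewrite (Derive_sol xa xb xc C1 alpha H1 H2 Hal).
    assert (HD2 : is_derive (fun y => Gf xa xb xc C1 alpha (thf xa xb xc C1 alpha y)) x
       ((- ((xb-xa)/2) * cos t * wf xa xb xc C1 alpha t + - ((xb-xa)/2) * sin t * (dw2 xa xb xc C1 alpha t / (2 * wf xa xb xc C1 alpha t))) * wf xa xb xc C1 alpha t)).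
    { pose proof (is_derive_comp (Gf xa xb xc C1 alpha) (thf xa xb xc C1 alpha) x _ _
        (Gf_derive xa xb xc C1 alpha _ H1 H2 Hal) (Hth x H1 H2 Hal)) as H.
      unfold scal in H; simpl in H; unfold mult in H; simpl in H. fold t in H.
      rewrite Rmult_comm. exact H. }
    rewrite (Derive_of (fun y => Gf xa xb xc C1 alpha (thf xa xb xc C1 alpha y)) x _ HD2).
    assert (Hne : C1 - sol xa xb xc C1 alpha x <> 0) by (unfold sol; fold t; lra).
    assert (Hsc : sin t ^ 2 + cos t ^ 2 = 1) by (pose proof (sin2_cos2 t) as H; unfold Rsqr in H; simpl; lra).
    assert (HWW : wf xa xb xc C1 alpha t * wf xa xb xc C1 alpha t =
       (sol xa xb xc C1 alpha x - xc) / (alpha ^ 2 * (C1 - sol xa xb xc C1 alpha x))) by (rewrite HW2; reflexivity).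
    apply (alg_E1' xa xb xc C1 alpha C2 b (sol xa xb xc C1 alpha x) (Gf xa xb xc C1 alpha t) _ (cos t) (sin t) (wf xa xb xc C1 alpha t) Hal Hne eq_refl eq_refl HWW Hsc); auto.
    unfold dw2. fold (Am xa xb t). unfold sol. fold t.
    field. split; [lra|]. split; [lra|]. lra.
  -
    intros x.
    set (t := thf xa xb xc C1 alpha x).
    assert (HA := Am_bounds xa xb t ltac:(lra)).
    assert (HW2 : wf xa xb xc C1 alpha t * wf xa xb xc C1 alpha t = w2f xa xb xc C1 alpha t).
    { unfold wf. apply sqrt_sqrt. apply Rlt_le, w2_pos; auto. }
    unfold phi. rewrite (Derive_sol xa xb xc C1 alpha H1 H2 Hal). fold t.
    assert (Hne : C1 - sol xa xb xc C1 alpha x <> 0) by (unfold sol; fold t; lra).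
    assert (Hsc : sin t ^ 2 + cos t ^ 2 = 1) by (pose proof (sin2_cos2 t) as H; unfold Rsqr in H; simpl; lra).
    assert (HWW : wf xa xb xc C1 alpha t * wf xa xb xc C1 alpha t =
       (sol xa xb xc C1 alpha x - xc) / (alpha ^ 2 * (C1 - sol xa xb xc C1 alpha x))) by (rewrite HW2; reflexivity).
    exact (alg_E2' xa xb xc C1 alpha C2 b C3 (sol xa xb xc C1 alpha x) (Gf xa xb xc C1 alpha t) (cos t) (sin t) (wf xa xb xc C1 alpha t) Hal Hne eq_refl eq_refl HWW Hsc HC2 Hb HC3).
Qed.

Lemma periodic_exists alpha C1 C2 C3 b : 0 < alpha -> 0 < 2*C1+C2 ->
  0 < C3 < C3crit C1 C2 -> bminus C1 C2 C3 < b < bplus C1 C2 C3 ->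
  exists phi, smooth_periodic_solution alpha C1 C2 C3 b phi.
Proof.
  intros Hal HK HC Hb.
  destruct (roots C1 C2 C3 b HK HC Hb) as [xa [xb [xc [H1 [H2 [H3 [H4 H5]]]]]]].
  exists (sol xa xb xc C1 alpha). apply sol_good; auto.
Qed.

Theorem theorem1 :
  forall alpha C1 C2 : R,
    0 < alpha -> 0 < 2 * C1 + C2 ->
    (* regularity and monotonicity of b_- and b_+ *)
    C1_on (bminus C1 C2) 0 (C3crit C1 C2) /\
    C1_on (bplus C1 C2) 0 (C3crit C1 C2) /\
    strictly_increasing_on (bminus C1 C2) 0 (C3crit C1 C2) /\
    strictly_increasing_on (bplus C1 C2) 0 (C3crit C1 C2) /\
    (* end-point limits *)
    filterlim (bminus C1 C2) (at_right 0)
      (locally (- / 2 * C1 ^ 2 - C1 * C2)) /\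
    filterlim (bminus C1 C2) (at_left (C3crit C1 C2))
      (locally (/ 6 * (C1 - C2) ^ 2)) /\
    filterlim (bplus C1 C2) (at_right 0)
      (locally (/ 8 * (C2 ^ 2 - 4 * C1 * C2))) /\
    filterlim (bplus C1 C2) (at_left (C3crit C1 C2))
      (locally (/ 6 * (C1 - C2) ^ 2)) /\
    (* C^1 inverses C3^- and C3^+, and the region enclosed by the boundaries
       C3 = 0, C3 = C3^+(b), C3 = C3^-(b) *)
    (exists C3m C3p : R -> R,
       C1_inverse (bminus C1 C2) C3m 0 (C3crit C1 C2)
         (- / 2 * C1 ^ 2 - C1 * C2) (/ 6 * (C1 - C2) ^ 2) /\
       C1_inverse (bplus C1 C2) C3p 0 (C3crit C1 C2)
         (/ 8 * (C2 ^ 2 - 4 * C1 * C2)) (/ 6 * (C1 - C2) ^ 2) /\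
       (forall C3 b : R,
          (0 < C3 < C3crit C1 C2 /\ bminus C1 C2 C3 < b < bplus C1 C2 C3) <->
          (- / 2 * C1 ^ 2 - C1 * C2 < b < / 6 * (C1 - C2) ^ 2 /\
           C3 < C3m b /\
           (b <= / 8 * (C2 ^ 2 - 4 * C1 * C2) -> 0 < C3) /\
           (/ 8 * (C2 ^ 2 - 4 * C1 * C2) < b -> C3p b < C3)))) /\
    (* existence of smooth periodic solutions in the region *)
    (forall C3 b : R,
       0 < C3 < C3crit C1 C2 ->
       bminus C1 C2 C3 < b < bplus C1 C2 C3 ->
       exists phi : R -> R, smooth_periodic_solution alpha C1 C2 C3 b phi).
Proof.
  intros alpha C1 C2 Hal HK.
  destruct (part1 C1 C2 HK) as (P1&P2&P3&P4&P5&P6&P7&P8&P9).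
  refine (conj P1 (conj P2 (conj P3 (conj P4 (conj P5 (conj P6 (conj P7 (conj P8 (conj P9 _))))))))).
  intros C3 b HC Hb. apply periodic_exists; auto.
Qed.
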